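(* For the space $\mathcal W$ defined below, $|\mathfrak P^\omega(\mathcal W)|=c$.
   Context: Identify $\mathbb R^2$ with $\mathbb C$. $\mathcal W=\{\tfrac1{2^{n+1}}e^{2\pi i\theta}+\tfrac1n+\tfrac{i}{2^{n+1}}:n\in\mathbb N,\theta\in[0,1]\}\cup[0,1]$, base point $0$. $c=|\mathbb R|$. An $\omega$-loop at $0$ is a continuous $k:[0,1]\to\mathcal W$ with $k(0)=k(1)=0$ all of whose fibres are finite; $\mathfrak P^\omega(\mathcal W)$ is the subgroup of $\pi_1(\mathcal W,0)$ generated by homotopy classes (rel endpoints) of $\omega$-loops at $0$. *)

(* Defs.v *)
(* classical reals. R^2 = C is modelled as R * R. *)
From Stdlib Require Import Reals List.
Open Scope R_scope.

Definition pt := (R * R)%type.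

Definition dist2 (p q : pt) : R :=
  sqrt ((fst p - fst q) ^ 2 + (snd p - snd q) ^ 2).

Definition origin : pt := (0, 0).

(* The space W: circles of radius 1/2^(n+1) centred at 1/n + i/2^(n+1)
   (n >= 1), together with the segment [0,1] on the real axis. *)
Definition W (z : pt) : Prop :=
  (exists (n : nat) (theta : R), (1 <= n)%nat /\ 0 <= theta <= 1 /\
     fst z = cos (2 * PI * theta) / 2 ^ (S n) + / INR n /\
     snd z = sin (2 * PI * theta) / 2 ^ (S n) + / 2 ^ (S n))
  \/ (snd z = 0 /\ 0 <= fst z <= 1).

Definition unit_I (t : R) : Prop := 0 <= t <= 1.

Definition cont_on_I (k : R -> pt) : Prop :=
  forall t, unit_I t -> forall eps, eps > 0 -> exists delta, delta > 0 /\
    forall s, unit_I s -> Rabs (s - t) < delta -> dist2 (k s) (k t) < eps.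

(* a loop in W based at 0 (only its values on [0,1] matter) *)
Definition loopW (k : R -> pt) : Prop :=
  cont_on_I k /\ (forall t, unit_I t -> W (k t)) /\
  k 0 = origin /\ k 1 = origin.

Definition finite_fibres (k : R -> pt) : Prop :=
  forall p : pt, exists l : list R, forall t, unit_I t -> k t = p -> In t l.

Definition omega_loop (k : R -> pt) : Prop := loopW k /\ finite_fibres k.

Definition homotopic (k1 k2 : R -> pt) : Prop :=
  exists H : R -> R -> pt,
    (forall s t, unit_I s -> unit_I t -> forall eps, eps > 0 ->
       exists delta, delta > 0 /\ forall s' t', unit_I s' -> unit_I t' ->
         dist2 (s', t') (s, t) < delta -> dist2 (H s' t') (H s t) < eps) /\
    (forall s t, unit_I s -> unit_I t -> W (H s t)) /\
    (forall t, unit_I t -> H 0 t = k1 t) /\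
    (forall t, unit_I t -> H 1 t = k2 t) /\
    (forall s, unit_I s -> H s 0 = origin /\ H s 1 = origin).

Definition const_loop : R -> pt := fun _ => origin.
Definition concat (k1 k2 : R -> pt) : R -> pt :=
  fun t => if Rle_dec t (/ 2) then k1 (2 * t) else k2 (2 * t - 1).
Definition reverse (k : R -> pt) : R -> pt := fun t => k (1 - t).

(* Loops whose homotopy class lies in P^omega(W): the smallest set of loops
   containing the omega-loops and the constant loop, closed under
   concatenation, reversal and homotopy rel endpoints, i.e. the union of the
   classes in the subgroup of pi_1(W,0) generated by classes of omega-loops. *)
Inductive in_Pomega : (R -> pt) -> Prop :=
  | Pom_gen : forall k, omega_loop k -> in_Pomega k
  | Pom_one : in_Pomega const_loop
  | Pom_mul : forall k1 k2, in_Pomega k1 -> in_Pomega k2 ->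
                in_Pomega (concat k1 k2)
  | Pom_inv : forall k, in_Pomega k -> in_Pomega (reverse k)
  | Pom_hom : forall k1 k2, in_Pomega k1 -> loopW k2 -> homotopic k1 k2 ->
                in_Pomega k2.

(* Main.v *)
Require Import Defs.
From Stdlib Require Import Reals List.
From Stdlib Require Import Lra Lia Psatz Classical ClassicalEpsilon ZArith Cantor Wf_nat.
Open Scope R_scope.

Lemma Rabs_le0 x : Rabs x <= 0 -> x = 0.
Proof. intros H. destruct (Rcase_abs x) as [h|h]; [rewrite Rabs_left in H|rewrite Rabs_right in H]; lra. Qed.

Lemma Rabs_lt_between x e : Rabs x < e <-> - e < x < e.
Proof. split; intros H. apply Rabs_def2 in H; lra. apply Rabs_def1; lra. Qed.

Lemma Rabs_le_between x e : Rabs x <= e <-> - e <= x <= e.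
Proof. destruct (Rcase_abs x); [rewrite Rabs_left|rewrite Rabs_right]; lra. Qed.

Lemma dist2_ge0 p q : 0 <= dist2 p q.
Proof. unfold dist2; apply sqrt_pos. Qed.

Lemma dist2_refl p : dist2 p p = 0.
Proof. unfold dist2. replace ((fst p - fst p) ^ 2 + (snd p - snd p) ^ 2) with 0 by ring. apply sqrt_0. Qed.

Lemma dist2_sym p q : dist2 p q = dist2 q p.
Proof. unfold dist2. f_equal. ring. Qed.

Lemma dist2_le p q : dist2 p q <= Rabs (fst p - fst q) + Rabs (snd p - snd q).
Proof.
  unfold dist2. set (a := fst p - fst q). set (b := snd p - snd q).
  rewrite <- (sqrt_Rsqr (Rabs a + Rabs b)) by (pose proof (Rabs_pos a); pose proof (Rabs_pos b); lra).
  apply sqrt_le_1_alt. unfold Rsqr.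
  pose proof (Rabs_pos a); pose proof (Rabs_pos b).
  assert (a ^ 2 = Rabs a * Rabs a) by (rewrite <- Rabs_mult; rewrite Rabs_right by nra; ring).
  assert (b ^ 2 = Rabs b * Rabs b) by (rewrite <- Rabs_mult; rewrite Rabs_right by nra; ring).
  nra.
Qed.

Lemma dist2_ge_x p q : Rabs (fst p - fst q) <= dist2 p q.
Proof.
  unfold dist2. rewrite <- sqrt_Rsqr_abs. apply sqrt_le_1_alt. unfold Rsqr.
  pose proof (pow2_ge_0 (snd p - snd q)). nra.
Qed.

Lemma dist2_ge_y p q : Rabs (snd p - snd q) <= dist2 p q.
Proof.
  unfold dist2. rewrite <- sqrt_Rsqr_abs. apply sqrt_le_1_alt. unfold Rsqr.
  pose proof (pow2_ge_0 (fst p - fst q)). nra.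
Qed.

Lemma dist2_sq p q : dist2 p q * dist2 p q = (fst p - fst q) ^ 2 + (snd p - snd q) ^ 2.
Proof. unfold dist2. apply sqrt_sqrt. pose proof (pow2_ge_0 (fst p - fst q)); pose proof (pow2_ge_0 (snd p - snd q)); lra. Qed.

Lemma dist2_tri p q r : dist2 p r <= dist2 p q + dist2 q r.
Proof.
  pose proof (dist2_sq p q) as H1; pose proof (dist2_sq q r) as H2; pose proof (dist2_sq p r) as H3.
  pose proof (dist2_ge0 p q); pose proof (dist2_ge0 q r); pose proof (dist2_ge0 p r).
  set (u := dist2 p q) in *. set (v := dist2 q r) in *. set (w := dist2 p r) in *.
  set (a := fst p - fst q) in *. set (b := snd p - snd q) in *.
  set (c := fst q - fst r) in *. set (d := snd q - snd r) in *.
  assert (Hw : w * w = (a + c) ^ 2 + (b + d) ^ 2) by (rewrite H3; unfold a, b, c, d; ring).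
  assert (Hcs : a * c + b * d <= u * v).
  { assert ((a*c+b*d)^2 <= (u*v)^2) by (replace ((u*v)^2) with ((u*u)*(v*v)) by ring; rewrite H1, H2; pose proof (pow2_ge_0 (a*d-b*c)); nra).
    destruct (Rle_dec (a*c+b*d) 0). { pose proof (Rmult_le_pos u v H H0). lra. }
    apply Rsqr_incr_0_var. { unfold Rsqr. nra. } apply Rmult_le_pos; lra. }
  apply Rsqr_incr_0_var. { unfold Rsqr. nra. } lra.
Qed.

Lemma dist2_eq0 p q : dist2 p q = 0 -> p = q.
Proof.
  intros H. pose proof (dist2_ge_x p q); pose proof (dist2_ge_y p q).
  pose proof (Rabs_pos (fst p - fst q)); pose proof (Rabs_pos (snd p - snd q)).
  assert (E1 : fst p - fst q = 0) by (apply Rabs_le0; lra).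
  assert (E2 : snd p - snd q = 0) by (apply Rabs_le0; lra).
  destruct p as [a b], q as [c d]; simpl in *. f_equal; lra.
Qed.

Lemma dist2_pair a b c d : dist2 (a, b) (c, d) = sqrt ((a - c) ^ 2 + (b - d) ^ 2).
Proof. reflexivity. Qed.

Definition cont_on (a b : R) (k : R -> pt) : Prop :=
  forall t, a <= t <= b -> forall eps, eps > 0 -> exists delta, delta > 0 /\
    forall s, a <= s <= b -> Rabs (s - t) < delta -> dist2 (k s) (k t) < eps.

Lemma cont_on_I_iff k : cont_on_I k <-> cont_on 0 1 k.
Proof. reflexivity. Qed.

Lemma cont_ext a b k g : (forall x, a <= x <= b -> k x = g x) -> cont_on a b g -> cont_on a b k.
Proof.
  intros He Hg t Ht eps Heps. destruct (Hg t Ht eps Heps) as [d [Hd H]].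
  exists d; split; auto. intros s Hs Hst. rewrite !He by auto. auto.
Qed.

Lemma cont_sub a b a' b' k : a <= a' -> b' <= b -> cont_on a b k -> cont_on a' b' k.
Proof.
  intros H1 H2 Hk t Ht eps Heps. destruct (Hk t ltac:(lra) eps Heps) as [d [Hd H]].
  exists d; split; auto. intros s Hs Hst. apply H; auto; lra.
Qed.

Lemma cont_paste a b c k : a <= b -> b <= c -> cont_on a b k -> cont_on b c k -> cont_on a c k.
Proof.
  intros Hab Hbc H1 H2 t Ht eps Heps.
  destruct (Rlt_dec t b) as [Htb|Htb].
  - destruct (H1 t ltac:(lra) eps Heps) as [d [Hd H]].
    exists (Rmin d (b - t)); split. { apply Rmin_glb_lt; lra. }
    intros s Hs Hst. apply Rabs_lt_between in Hst. pose proof (Rmin_l d (b-t)); pose proof (Rmin_r d (b-t)).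
    apply H. lra. apply Rabs_lt_between; lra.
  - destruct (Rlt_dec b t) as [Hbt|Hbt].
    + destruct (H2 t ltac:(lra) eps Heps) as [d [Hd H]].
      exists (Rmin d (t - b)); split. { apply Rmin_glb_lt; lra. }
      intros s Hs Hst. apply Rabs_lt_between in Hst. pose proof (Rmin_l d (t-b)); pose proof (Rmin_r d (t-b)).
      apply H. lra. apply Rabs_lt_between; lra.
    + assert (t = b) by lra. subst t.
      destruct (H1 b ltac:(lra) eps Heps) as [d1 [Hd1 G1]].
      destruct (H2 b ltac:(lra) eps Heps) as [d2 [Hd2 G2]].
      exists (Rmin d1 d2); split. { apply Rmin_glb_lt; lra. }
      intros s Hs Hst. pose proof (Rmin_l d1 d2); pose proof (Rmin_r d1 d2).
      destruct (Rle_dec s b). apply G1; [lra|]. lra. apply G2; [lra|]. lra.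
Qed.

Lemma cont_affine a b c d k : cont_on 0 1 k -> (forall t, a <= t <= b -> 0 <= c * t + d <= 1) ->
  cont_on a b (fun t => k (c * t + d)).
Proof.
  intros Hk Hr t Ht eps Heps. destruct (Hk (c*t+d) (Hr t Ht) eps Heps) as [del [Hdel H]].
  exists (del / (Rabs c + 1)). split. { apply Rdiv_lt_0_compat; [lra|]. pose proof (Rabs_pos c); lra. }
  intros s Hs Hst. apply H. apply Hr; auto.
  replace (c * s + d - (c * t + d)) with (c * (s - t)) by ring. rewrite Rabs_mult.
  pose proof (Rabs_pos c). pose proof (Rabs_pos (s - t)).
  assert (Rabs (s - t) * (Rabs c + 1) < del).
  { apply (Rmult_lt_compat_r (Rabs c + 1)) in Hst; [|lra]. unfold Rdiv in Hst. rewrite Rmult_assoc, Rinv_l in Hst; lra. }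
  nra.
Qed.

Lemma cont_comp (g1 g2 : R -> R) a b :
  (forall x, a <= x <= b -> continuity_pt g1 x) -> (forall x, a <= x <= b -> continuity_pt g2 x) ->
  cont_on a b (fun x => (g1 x, g2 x)).
Proof.
  intros C1 C2 t Ht eps Heps.
  destruct (C1 t Ht (eps/2) ltac:(lra)) as [a1 [Ha1 G1]].
  destruct (C2 t Ht (eps/2) ltac:(lra)) as [a2 [Ha2 G2]].
  exists (Rmin a1 a2); split. { apply Rmin_glb_lt; lra. }
  intros s Hs Hst. pose proof (Rmin_l a1 a2); pose proof (Rmin_r a1 a2).
  destruct (Req_dec s t) as [E|E]. { subst. rewrite dist2_refl. lra. }
  eapply Rle_lt_trans. apply dist2_le. simpl.
  assert (Rabs (g1 s - g1 t) < eps/2). { apply (G1 s). split; [split; [exact I|congruence]|simpl; unfold R_dist; lra]. }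
  assert (Rabs (g2 s - g2 t) < eps/2). { apply (G2 s). split; [split; [exact I|congruence]|simpl; unfold R_dist; lra]. }
  lra.
Qed.

Lemma cont_const a b p : cont_on a b (fun _ => p).
Proof. intros t Ht eps Heps. exists 1. split. lra. intros. rewrite dist2_refl. lra. Qed.

Fixpoint lmin (d : R -> R) (l : list R) : R :=
  match l with nil => 1 | x :: l' => Rmin (d x) (lmin d l') end.

Lemma lmin_pos d l : (forall x, In x l -> d x > 0) -> lmin d l > 0.
Proof.
  induction l; simpl; intros H. lra.
  apply Rmin_glb_lt. apply H; auto. apply IHl; auto.
Qed.

Lemma lmin_le d l x : In x l -> lmin d l <= d x.
Proof.
  induction l; simpl; intros H. contradiction.
  destruct H as [->|H]. apply Rmin_l. eapply Rle_trans. apply Rmin_r. auto.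
Qed.

Lemma cover01 (d : R -> R) : (forall x, 0 <= x <= 1 -> d x > 0) ->
  exists e, e > 0 /\ forall y, 0 <= y <= 1 -> exists x, 0 <= x <= 1 /\ Rabs (y - x) < d x /\ e <= d x.
Proof.
  intros Hd.
  set (fam := mkfamily (fun x => 0 <= x <= 1) (fun x y => (0 <= x <= 1) /\ Rabs (y - x) < d x)
        (fun x (H : exists y, (0 <= x <= 1) /\ Rabs (y - x) < d x) => match H with ex_intro _ y Hy => proj1 Hy end)).
  assert (Hc : covering_open_set (fun c => 0 <= c <= 1) fam).
  { split.
    - intros y Hy. exists y. simpl. split; auto. replace (y - y) with 0 by ring. rewrite Rabs_R0. apply Hd; auto.
    - intros x y Hy. simpl in Hy. destruct Hy as [Hx Hy].
      assert (Hp : 0 < d x - Rabs (y - x)) by lra.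
      exists (mkposreal _ Hp). intros z Hz. unfold disc in Hz. simpl in Hz. simpl. split; auto.
      pose proof (Rabs_triang (z - y) (y - x)). replace (z - y + (y - x)) with (z - x) in H by ring. lra. }
  destruct (compact_P3 0 1 fam Hc) as [D [Hcov [l Hl]]].
  exists (lmin d l). split.
  - apply lmin_pos. intros x Hx. apply Hl in Hx. destruct Hx as [Hx _]. apply Hd. exact Hx.
  - intros y Hy. destruct (Hcov y Hy) as [x [[Hx1 Hx2] HD]].
    exists x. split; auto. split; auto. apply lmin_le. apply Hl. split; auto.
Qed.


Lemma choiceR (P : R -> Prop) (Q : R -> R -> Prop) :
  (forall x, P x -> exists y, Q x y) -> exists f : R -> R, forall x, P x -> Q x (f x).
Proof.
  intros H.
  assert (H' : forall x, exists y, P x -> Q x y).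
  { intros x. destruct (classic (P x)) as [Hp|Hp]. destruct (H x Hp) as [y Hy]. exists y; auto. exists 0; tauto. }
  exists (fun x => proj1_sig (constructive_indefinite_description _ (H' x))).
  intros x Hx. destruct (constructive_indefinite_description _ (H' x)) as [y Hy]. simpl. auto.
Qed.

Definition hcont (H : R -> R -> pt) : Prop :=
  forall s t, unit_I s -> unit_I t -> forall eps, eps > 0 ->
       exists delta, delta > 0 /\ forall s' t', unit_I s' -> unit_I t' ->
         dist2 (s', t') (s, t) < delta -> dist2 (H s' t') (H s t) < eps.

Lemma unif_stepA H : hcont H -> forall eps, eps > 0 -> forall s0, unit_I s0 ->
  exists del, del > 0 /\ forall s s' t t', unit_I s -> unit_I s' -> unit_I t -> unit_I t' ->
    Rabs (s - s0) < del -> Rabs (s' - s0) < del -> Rabs (t - t') < del -> dist2 (H s t) (H s' t') < eps.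
Proof.
  intros Hc eps Heps s0 Hs0.
  destruct (choiceR (fun t0 => 0 <= t0 <= 1) (fun t0 d => d > 0 /\ forall s' t', unit_I s' -> unit_I t' ->
         dist2 (s', t') (s0, t0) < d -> dist2 (H s' t') (H s0 t0) < eps/2)) as [f Hf].
  { intros t0 Ht0. apply (Hc s0 t0 Hs0 Ht0 (eps/2)). lra. }
  destruct (cover01 (fun x => f x / 4)) as [e [He Hcov]].
  { intros x Hx. destruct (Hf x Hx). lra. }
  exists e. split; auto. intros s s' t t' Hs Hs' Ht Ht' H1 H2 H3.
  destruct (Hcov t Ht) as [x [Hx [Hx1 Hx2]]]. destruct (Hf x Hx) as [Hfx G].
  apply Rabs_lt_between in H1, H2, H3, Hx1.
  assert (A1 : dist2 (H s t) (H s0 x) < eps/2).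
  { apply G; auto. eapply Rle_lt_trans. apply dist2_le. simpl.
    assert (Rabs (s - s0) < f x / 4) by (apply Rabs_lt_between; lra).
    assert (Rabs (t - x) < f x / 4) by (apply Rabs_lt_between; lra). lra. }
  assert (A2 : dist2 (H s' t') (H s0 x) < eps/2).
  { apply G; auto. eapply Rle_lt_trans. apply dist2_le. simpl.
    assert (Rabs (s' - s0) < f x / 4) by (apply Rabs_lt_between; lra).
    assert (Rabs (t' - x) < f x / 2) by (apply Rabs_lt_between; lra). lra. }
  eapply Rle_lt_trans. apply (dist2_tri _ (H s0 x)). rewrite (dist2_sym (H s0 x)). lra.
Qed.

Lemma unif2 H : hcont H -> forall eps, eps > 0 -> exists del, del > 0 /\
  forall s t s' t', unit_I s -> unit_I t -> unit_I s' -> unit_I t' ->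
    Rabs (s - s') < del -> Rabs (t - t') < del -> dist2 (H s t) (H s' t') < eps.
Proof.
  intros Hc eps Heps.
  destruct (choiceR (fun s0 => 0 <= s0 <= 1) (fun s0 del => del > 0 /\ forall s s' t t', unit_I s -> unit_I s' -> unit_I t -> unit_I t' ->
    Rabs (s - s0) < del -> Rabs (s' - s0) < del -> Rabs (t - t') < del -> dist2 (H s t) (H s' t') < eps)) as [f Hf].
  { intros s0 Hs0. apply unif_stepA; auto. }
  destruct (cover01 (fun x => f x / 2)) as [e [He Hcov]].
  { intros x Hx. destruct (Hf x Hx). lra. }
  exists e. split; auto. intros s t s' t' Hs Ht Hs' Ht' H1 H2.
  destruct (Hcov s Hs) as [x [Hx [Hx1 Hx2]]]. destruct (Hf x Hx) as [Hfx G].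
  apply G; auto.
  - apply Rabs_lt_between in Hx1. apply Rabs_lt_between. lra.
  - apply Rabs_lt_between in Hx1. apply Rabs_lt_between in H1. apply Rabs_lt_between. lra.
  - lra.
Qed.

Fixpoint sumN (f : nat -> R) (N : nat) : R :=
  match N with O => 0 | S k => sumN f k + f k end.

Lemma sumN_ext f g N : (forall i, (i < N)%nat -> f i = g i) -> sumN f N = sumN g N.
Proof. induction N; simpl; intros H; auto. rewrite IHN by (intros; apply H; lia). rewrite H by lia. auto. Qed.

Lemma sumN_minus f g N : sumN (fun i => f i - g i) N = sumN f N - sumN g N.
Proof. induction N; simpl. ring. rewrite IHN. ring. Qed.

Lemma sumN_tele g N : sumN (fun i => g (S i) - g i) N = g N - g O.
Proof. induction N; simpl. ring. rewrite IHN. ring. Qed.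

Lemma sumN_tele' f g N : (forall i, (i < N)%nat -> f i = g (S i) - g i) -> sumN f N = g N - g O.
Proof. intros H. rewrite (sumN_ext f (fun i => g (S i) - g i)) by auto. apply sumN_tele. Qed.

Definition cm (a b : pt) : pt := (fst a * fst b - snd a * snd b, fst a * snd b + snd a * fst b).
Definition cj (a : pt) : pt := (fst a, - snd a).
Definition unitv (a : pt) : Prop := fst a ^ 2 + snd a ^ 2 = 1.
Definition rot (x : R) : pt := (cos x, sin x).
Definition Arg (w : pt) : R := atan (snd w / fst w).

Lemma unit_rot x : unitv (rot x).
Proof. unfold unitv, rot; simpl. pose proof (sin2_cos2 x). unfold Rsqr in H. nra. Qed.

Lemma unit_cm a b : unitv a -> unitv b -> unitv (cm a b).
Proof. intros Ha Hb; unfold unitv, cm in *; cbn [fst snd].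
  replace ((fst a * fst b - snd a * snd b) ^ 2 + (fst a * snd b + snd a * fst b) ^ 2)
    with ((fst a ^ 2 + snd a ^ 2) * (fst b ^ 2 + snd b ^ 2)) by ring. rewrite Ha, Hb. ring. Qed.

Lemma unit_cj a : unitv a -> unitv (cj a).
Proof. intros H; unfold unitv, cj in *; cbn [fst snd]. replace ((- snd a) ^ 2) with (snd a ^ 2) by ring. exact H. Qed.

Lemma cm_rot a b : cm (rot a) (rot b) = rot (a + b).
Proof. unfold cm, rot; simpl. rewrite cos_plus, sin_plus. f_equal; ring. Qed.

Lemma cm_comm a b : cm a b = cm b a.
Proof. unfold cm. f_equal; ring. Qed.

Lemma cj_cm a b : cj (cm a (cj b)) = cm b (cj a).
Proof. unfold cj, cm; simpl. f_equal; ring. Qed.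

Lemma cm_cancel x y b : unitv b -> cm (cm x (cj b)) (cm b y) = cm x y.
Proof. intros H; unfold unitv, cm, cj in *; cbn [fst snd]. f_equal.
  - replace ((fst x * fst b - snd x * - snd b) * (fst b * fst y - snd b * snd y) -
     (fst x * - snd b + snd x * fst b) * (fst b * snd y + snd b * fst y)) with
     ((fst b ^ 2 + snd b ^ 2) * (fst x * fst y - snd x * snd y)) by ring. rewrite H; ring.
  - replace ((fst x * fst b - snd x * - snd b) * (fst b * snd y + snd b * fst y) +
     (fst x * - snd b + snd x * fst b) * (fst b * fst y - snd b * snd y)) with
     ((fst b ^ 2 + snd b ^ 2) * (fst x * snd y + snd x * fst y)) by ring. rewrite H; ring.
Qed.

Lemma Arg_rot x : - (PI / 2) < x < PI / 2 -> Arg (rot x) = x.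
Proof. intros H. unfold Arg, rot; simpl. fold (tan x). apply atan_tan; auto. Qed.

Lemma rot_Arg w : unitv w -> fst w > 0 -> w = rot (Arg w).
Proof.
  intros Hu Hp. unfold Arg, rot. rewrite cos_atan, sin_atan.
  destruct w as [a b]; simpl in *. unfold unitv in Hu; simpl in Hu.
  assert (E : 1 + (b / a)² = / (a * a)). { unfold Rsqr. assert (Hu' : a * a + b * b = 1) by nra.
    replace (1 + b / a * (b / a)) with ((a * a + b * b) / (a * a)) by (field; lra). rewrite Hu'. field; lra. }
  rewrite E. rewrite sqrt_inv. rewrite sqrt_square by lra. f_equal; field; lra.
Qed.

Lemma Arg_cj w : Arg (cj w) = - Arg w.
Proof. unfold Arg, cj; simpl. rewrite <- atan_opp. f_equal. unfold Rdiv. ring. Qed.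

Lemma atan_small x : Rabs x < 1/2 -> Rabs (atan x) < PI / 6.
Proof.
  intros H. apply Rabs_lt_between in H.
  assert (S3 : 1/2 < 1 / sqrt 3).
  { assert (sqrt 3 < 2). { rewrite <- (sqrt_square 2) by lra. apply sqrt_lt_1_alt. lra. }
    assert (0 < sqrt 3) by (apply sqrt_lt_R0; lra).
    apply Rmult_lt_reg_r with (2 * sqrt 3). nra. field_simplify; lra. }
  pose proof PI6_RGT_0. pose proof PI6_RLT_PI2.
  assert (atan (1 / sqrt 3) = PI / 6). { rewrite <- tan_PI6. apply atan_tan. lra. }
  assert (atan x < atan (1 / sqrt 3)) by (apply atan_increasing; lra).
  assert (atan (- (1 / sqrt 3)) < atan x) by (apply atan_increasing; lra).
  rewrite atan_opp in H4. apply Rabs_lt_between. lra.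
Qed.

Lemma small_prod a b : unitv a -> unitv b -> dist2 a b < 1/4 ->
  unitv (cm a (cj b)) /\ fst (cm a (cj b)) > 0 /\ Rabs (Arg (cm a (cj b))) < PI / 6.
Proof.
  intros Ha Hb Hd. assert (Hu : unitv (cm a (cj b))) by (apply unit_cm; auto; apply unit_cj; auto).
  pose proof (dist2_sq a b) as Hsq. pose proof (dist2_ge0 a b).
  unfold unitv, cm, cj in *; simpl in *.
  set (a1 := fst a) in *. set (a2 := snd a) in *. set (b1 := fst b) in *. set (b2 := snd b) in *.
  set (dd := dist2 a b) in *.
  assert (Hre : a1 * b1 - a2 * - b2 = 1 - dd * dd / 2) by (rewrite Hsq; nra).
  assert (dd * dd < 1/16) by nra.
  split; auto. split. lra.
  apply atan_small. rewrite Hre.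
  set (im := a1 * - b2 + a2 * b1) in *.
  assert (im ^ 2 <= dd * dd) by (rewrite Hre in Hu; nra).
  assert (Rabs im < 1/4).
  { apply Rabs_lt_between. split; nra. }
  set (den := 1 - dd * dd / 2).
  assert (Hden : den > 31/32) by (unfold den; lra).
  assert (Hi : den * / den = 1) by (field; lra).
  assert (Hip : 0 < / den) by (apply Rinv_0_lt_compat; lra).
  assert (Hx : / den < 32/31) by nra.
  apply Rabs_lt_between in H2. apply Rabs_lt_between. unfold Rdiv.
  assert (0 < (1/4 - im) * / den) by (apply Rmult_lt_0_compat; lra).
  assert (0 < (1/4 + im) * / den) by (apply Rmult_lt_0_compat; lra).
  cbn [fst snd]. split; nra.
Qed.

Lemma arg_step a a' b b' : unitv a -> unitv a' -> unitv b -> unitv b' ->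
  dist2 a' a < 1/4 -> dist2 b' b < 1/4 -> dist2 b a < 1/4 -> dist2 b' a' < 1/4 ->
  Arg (cm a' (cj a)) - Arg (cm b' (cj b)) = Arg (cm b (cj a)) - Arg (cm b' (cj a')).
Proof.
  intros Ua Ua' Ub Ub' D1 D2 D3 D4.
  destruct (small_prod b' b Ub' Ub D2) as [UX [PX AX]].
  destruct (small_prod b a Ub Ua D3) as [UY [PY AY]].
  destruct (small_prod b' a' Ub' Ua' D4) as [UZ [PZ AZ]].
  set (al := Arg (cm b' (cj b))) in *. set (be := Arg (cm b (cj a))) in *. set (ga := Arg (cm b' (cj a'))) in *.
  assert (E : cm a' (cj a) = rot (al + be - ga)).
  { transitivity (cm (cm (cm b' (cj b)) (cm b (cj a))) (cj (cm b' (cj a')))).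
    - symmetry. rewrite cm_cancel by auto. rewrite cj_cm. rewrite cm_comm. rewrite cm_cancel by auto. reflexivity.
    - rewrite (rot_Arg _ UX PX), (rot_Arg _ UY PY).
      rewrite (rot_Arg _ UZ PZ) at 1. fold al be ga. unfold rot at 3. unfold cj. simpl.
      rewrite <- cos_neg, <- sin_neg. fold (rot (- ga)). rewrite !cm_rot. f_equal; ring. }
  rewrite E. rewrite Arg_rot. fold al be ga. ring.
  pose proof PI_RGT_0. apply Rabs_lt_between in AX, AY, AZ. lra.
Qed.

Lemma Arg_self a : unitv a -> Arg (cm a (cj a)) = 0.
Proof. unfold Arg, cm, cj, unitv; simpl; intros H.
  replace (fst a * - snd a + snd a * fst a) with 0 by ring. unfold Rdiv. rewrite Rmult_0_l. apply atan_0. Qed.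

Definition Dsum (a : nat -> pt) (N : nat) : R := sumN (fun i => Arg (cm (a (S i)) (cj (a i)))) N.

Lemma Dsum_invariant (a b : nat -> pt) N :
  (forall i, (i <= N)%nat -> unitv (a i) /\ unitv (b i)) ->
  (forall i, (i < N)%nat -> dist2 (a (S i)) (a i) < 1/4 /\ dist2 (b (S i)) (b i) < 1/4) ->
  (forall i, (i <= N)%nat -> dist2 (b i) (a i) < 1/4) ->
  a O = b O -> a N = b N -> Dsum a N = Dsum b N.
Proof.
  intros HU HS HD H0 HN. unfold Dsum.
  apply Rminus_diag_uniq. rewrite <- sumN_minus.
  rewrite (sumN_tele' _ (fun j => - Arg (cm (b j) (cj (a j))))).
  - rewrite <- H0, <- HN. rewrite !Arg_self. ring. apply HU; lia. apply HU; lia.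
  - intros i Hi. destruct (HU i ltac:(lia)). destruct (HU (S i) ltac:(lia)). destruct (HS i Hi).
    rewrite arg_step; try ring; auto; apply HD; lia.
Qed.

Lemma pow2_pos k : 0 < 2 ^ k.
Proof. apply pow_lt; lra. Qed.

Lemma Rdiv_le_0_compat a b : 0 <= a -> 0 < b -> 0 <= a / b.
Proof. intros. unfold Rdiv. apply Rmult_le_pos; auto. left. apply Rinv_0_lt_compat; auto. Qed.

Lemma INR_ge1 m : (1 <= m)%nat -> 1 <= INR m.
Proof. intros H. apply (le_INR 1) in H. simpl in H. exact H. Qed.

Lemma powbound1 m : INR m * (INR m + 1) + 2 <= 2 ^ S (S m).
Proof.
  induction m. simpl. lra.
  rewrite S_INR. change (2 ^ S (S (S m))) with (2 * 2 ^ S (S m)).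
  destruct m. simpl. lra.
  pose proof (INR_ge1 (S m) ltac:(lia)). nra.
Qed.

Lemma powbound2 n : (8 <= n)%nat -> 13 * INR n * INR n <= 2 ^ (S (S (S n))).
Proof.
  intros H. induction H. simpl. lra.
  rewrite S_INR. change (2 ^ S (S (S (S m)))) with (2 * 2 ^ S (S (S m))).
  assert (8 <= INR m) by (apply (le_INR 8) in H; simpl in H; lra). nra.
Qed.

Lemma fdec m : (1 <= m)%nat -> / INR (S m) - / 2 ^ S (S m) <= / INR m - / 2 ^ S m.
Proof.
  intros Hm. pose proof (INR_ge1 m Hm). rewrite S_INR. pose proof (powbound1 m).
  pose proof (pow2_pos (S m)). change (2 ^ S (S m)) with (2 * 2 ^ S m).
  set (P := 2 ^ S m) in *. change (2 ^ S (S m)) with (2 * P) in H0.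
  assert (E : / INR m - / P - (/ (INR m + 1) - / (2 * P)) = (2 * P - INR m * (INR m + 1)) / (2 * P * INR m * (INR m + 1))) by (field; lra).
  assert (0 <= (2 * P - INR m * (INR m + 1)) / (2 * P * INR m * (INR m + 1))).
  { apply Rdiv_le_0_compat. lra. apply Rmult_lt_0_compat. nra. lra. }
  lra.
Qed.

Lemma fdec_gen m k : (1 <= m)%nat -> / INR (m + k) - / 2 ^ S (m + k) <= / INR m - / 2 ^ S m.
Proof.
  intros Hm. induction k. rewrite Nat.add_0_r; lra.
  eapply Rle_trans; [|exact IHk]. rewrite Nat.add_succ_r. apply fdec. lia.
Qed.

Lemma hdec_gen m k : (1 <= m)%nat -> / INR (m + k) + / 2 ^ S (m + k) <= / INR m + / 2 ^ S m.
Proof.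
  intros Hm. induction k. rewrite Nat.add_0_r; lra.
  eapply Rle_trans; [|exact IHk]. rewrite Nat.add_succ_r.
  pose proof (INR_ge1 (m+k) ltac:(lia)). rewrite S_INR. change (2 ^ S (S (m + k))) with (2 * 2 ^ S (m+k)).
  pose proof (pow2_pos (S (m + k))).
  apply Rplus_le_compat. apply Rinv_le_contravar; lra. apply Rinv_le_contravar; lra.
Qed.

Lemma sep n m x : (8 <= n)%nat -> (1 <= m)%nat -> m <> n ->
  Rabs (x - / INR m) <= / 2 ^ S m -> Rabs (x - / INR n) >= 5/4 * / 2 ^ S n.
Proof.
  intros Hn Hm Hmn Hx. apply Rabs_le_between in Hx.
  pose proof (powbound2 n Hn). pose proof (INR_ge1 n ltac:(lia)).
  assert (HP : 0 < 2 ^ n) by apply pow2_pos.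
  replace (2 ^ S (S (S n))) with (8 * 2 ^ n) in H by (simpl; ring).
  change (2 ^ S n) with (2 * 2 ^ n).
  set (P := 2 ^ n) in *. set (X := INR n) in *.
  assert (H8 : 8 <= X) by (apply (le_INR 8) in Hn; simpl in Hn; unfold X; lra).
  destruct (Nat.lt_ge_cases n m) as [Hlt|Hge].
  -
    pose proof (hdec_gen (S n) (m - S n) ltac:(lia)). replace (S n + (m - S n))%nat with m in H1 by lia.
    rewrite S_INR in H1. fold X in H1. change (2 ^ S (S n)) with (2 * (2 * P)) in H1.
    assert (E : / X - 5/4 * / (2 * P) - (/ (X + 1) + / (2 * (2 * P))) = (8 * P - 7 * X * (X + 1)) / (8 * P * X * (X + 1))) by (field; lra).
    assert (0 <= (8 * P - 7 * X * (X + 1)) / (8 * P * X * (X + 1))).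
    { apply Rdiv_le_0_compat. nra. apply Rmult_lt_0_compat. nra. lra. }
    assert (0 < / (2 * P)) by (apply Rinv_0_lt_compat; lra). rewrite Rabs_left1 by lra. lra.
  - assert (m < n)%nat by lia.
    pose proof (fdec_gen m (n - 1 - m) Hm). replace (m + (n - 1 - m))%nat with (n - 1)%nat in H2 by lia.
    assert (E1 : INR (n - 1) = X - 1) by (rewrite minus_INR by lia; simpl; unfold X; ring).
    assert (E2 : 2 ^ S (n - 1) = P) by (replace (S (n - 1)) with n by lia; reflexivity).
    rewrite E1, E2 in H2.
    assert (E : / (X - 1) - / P - (/ X + 5/4 * / (2 * P)) = (8 * P - 13 * X * (X - 1)) / (8 * P * X * (X - 1))) by (field; split; lra).
    assert (0 <= (8 * P - 13 * X * (X - 1)) / (8 * P * X * (X - 1))).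
    { apply Rdiv_le_0_compat. nra. assert (8 <= X) by (apply (le_INR 8) in Hn; simpl in Hn; unfold X; lra). apply Rmult_lt_0_compat. nra. lra. }
    assert (0 < / (2 * P)) by (apply Rinv_0_lt_compat; lra). rewrite Rabs_right by lra. lra.
Qed.

Definition rr (n : nat) : R := / 2 ^ S n.
Definition cen (n : nat) : pt := (/ INR n, / 2 ^ S n).
Definition phi (n : nat) (z : pt) : pt :=
  if Req_EM_T (dist2 z (cen n)) (rr n) then ((fst z - / INR n) / rr n, (snd z - rr n) / rr n) else (0, -1).

Lemma rr_pos n : 0 < rr n.
Proof. unfold rr. apply Rinv_0_lt_compat, pow2_pos. Qed.

Lemma circ_dist m th : dist2 (cos (2 * PI * th) / 2 ^ S m + / INR m, sin (2 * PI * th) / 2 ^ S m + / 2 ^ S m) (cen m) = rr m.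
Proof.
  unfold dist2, cen, rr; cbn [fst snd].
  pose proof (pow2_pos (S m)).
  replace ((cos (2 * PI * th) / 2 ^ S m + / INR m - / INR m) ^ 2 + (sin (2 * PI * th) / 2 ^ S m + / 2 ^ S m - / 2 ^ S m) ^ 2)
    with ((sin (2 * PI * th) ^ 2 + cos (2 * PI * th) ^ 2) * (/ 2 ^ S m) ^ 2) by (unfold Rdiv; ring).
  pose proof (sin2_cos2 (2 * PI * th)). unfold Rsqr in H0.
  replace (sin (2 * PI * th) ^ 2 + cos (2 * PI * th) ^ 2) with 1 by (simpl; lra).
  rewrite Rmult_1_l. apply sqrt_pow2. left. apply Rinv_0_lt_compat. auto.
Qed.

Lemma W_cases z : W z -> (snd z = 0 /\ 0 <= fst z <= 1) \/
  exists m, (1 <= m)%nat /\ dist2 z (cen m) = rr m.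
Proof.
  intros [[m [th [Hm [Hth [E1 E2]]]]]|H]; [right|left; auto].
  exists m. split; auto. destruct z as [x y]; simpl in *. subst. apply circ_dist.
Qed.

Lemma onC_x n z : dist2 z (cen n) = rr n -> Rabs (fst z - / INR n) <= rr n.
Proof. intros H. rewrite <- H. apply (dist2_ge_x z (cen n)). Qed.

Lemma unit_phi n z : unitv (phi n z).
Proof.
  unfold phi. destruct (Req_EM_T (dist2 z (cen n)) (rr n)) as [E|E].
  - pose proof (dist2_sq z (cen n)). rewrite E in H. pose proof (rr_pos n). unfold unitv; cbn [fst snd].
    unfold cen in H; cbn [fst snd] in H. fold (rr n) in H.
    set (a := / INR n) in *.
    replace (((fst z - a) / rr n) ^ 2 + ((snd z - rr n) / rr n) ^ 2) with
      (((fst z - a) ^ 2 + (snd z - rr n) ^ 2) / (rr n * rr n)) by (field; lra).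
    rewrite <- H. field. lra.
  - unfold unitv; cbn [fst snd]. ring.
Qed.

Lemma phi_off n z : dist2 z (cen n) <> rr n -> phi n z = (0, -1).
Proof. intros H. unfold phi. destruct (Req_EM_T (dist2 z (cen n)) (rr n)); tauto. Qed.

Lemma phi_on n z : dist2 z (cen n) = rr n -> phi n z = ((fst z - / INR n) / rr n, (snd z - rr n) / rr n).
Proof. intros H. unfold phi. destruct (Req_EM_T (dist2 z (cen n)) (rr n)); tauto. Qed.

Lemma phi_near_bottom n z : dist2 z (cen n) = rr n ->
  dist2 (phi n z) (0, -1) = sqrt (2 * snd z / rr n).
Proof.
  intros H. rewrite phi_on by auto. pose proof (dist2_sq z (cen n)). rewrite H in H0.
  unfold cen in H0; cbn [fst snd] in H0. fold (rr n) in H0. pose proof (rr_pos n).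
  unfold dist2; cbn [fst snd]. f_equal. set (a := / INR n) in *.
  replace (((fst z - a) / rr n - 0) ^ 2 + ((snd z - rr n) / rr n - -1) ^ 2) with
    (((fst z - a) ^ 2 + (snd z - rr n) ^ 2 + 2 * rr n * snd z - rr n * rr n) / (rr n * rr n)) by (field; lra).
  rewrite <- H0. field. lra.
Qed.

Lemma phi_unif n : (8 <= n)%nat -> forall eps, eps > 0 -> exists del, del > 0 /\
  forall z w, W z -> W w -> dist2 z w < del -> dist2 (phi n z) (phi n w) < eps.
Proof.
  intros Hn eps Heps. pose proof (rr_pos n) as Hr. set (r := rr n) in *.
  assert (Side : forall z w, dist2 z (cen n) = r -> dist2 w (cen n) <> r -> W w ->
             dist2 z w < Rmin (eps * eps * r / 2) (r / 4) -> dist2 (phi n z) (phi n w) < eps).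
  { intros z w Hz Hw HW Hd. rewrite (phi_off n w Hw).
    pose proof (Rmin_l (eps * eps * r / 2) (r / 4)). pose proof (Rmin_r (eps * eps * r / 2) (r / 4)).
    destruct (W_cases w HW) as [[Hy Hx]|[m [Hm Hcm]]].
    - rewrite phi_near_bottom by auto.
      pose proof (dist2_ge_y z w). rewrite Hy in H1. rewrite Rminus_0_r in H1.
      pose proof (Rle_abs (snd z)).
      rewrite <- (sqrt_Rsqr eps) by lra. apply sqrt_lt_1_alt. split.
      + assert (0 <= snd z).
        { pose proof (dist2_sq z (cen n)). rewrite Hz in H3. unfold cen in H3; cbn [fst snd] in H3. fold (rr n) in H3. fold r in H3. pose proof (pow2_ge_0 (fst z - / INR n)). nra. }
        fold r. apply Rdiv_le_0_compat; lra.
      + fold r. unfold Rsqr. apply Rmult_lt_reg_r with r. auto. unfold Rdiv. rewrite Rmult_assoc, Rinv_l by lra. lra.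
    - assert (m <> n) by (intros ->; tauto).
      exfalso. pose proof (sep n m (fst w) Hn Hm H1). pose proof (onC_x m w Hcm). unfold rr in H3.
      specialize (H2 H3). pose proof (onC_x n z Hz). fold r in H4. unfold rr in H2. fold (rr n) in H2. fold r in H2.
      pose proof (dist2_ge_x z w).
      pose proof (Rabs_triang (fst z - / INR n) (fst w - fst z)). replace (fst z - / INR n + (fst w - fst z)) with (fst w - / INR n) in H6 by ring.
      rewrite (Rabs_minus_sym (fst w) (fst z)) in H6. lra. }
  exists (Rmin (eps * r / 4) (Rmin (eps * eps * r / 2) (r / 4))). split.
  { apply Rmin_glb_lt. apply Rmult_lt_0_compat; [nra|lra]. apply Rmin_glb_lt. assert (0 < eps * eps) by nra. apply Rmult_lt_0_compat; [nra|lra]. lra. }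
  intros z w Hz Hw Hd. pose proof (Rmin_l (eps * r / 4) (Rmin (eps * eps * r / 2) (r / 4))).
  pose proof (Rmin_r (eps * r / 4) (Rmin (eps * eps * r / 2) (r / 4))).
  destruct (Req_EM_T (dist2 z (cen n)) r) as [Ez|Ez]; destruct (Req_EM_T (dist2 w (cen n)) r) as [Ew|Ew].
  - rewrite !phi_on by auto. eapply Rle_lt_trans. apply dist2_le. cbn [fst snd]. fold r. set (a := / INR n) in *.
    replace ((fst z - a) / r - (fst w - a) / r) with ((fst z - fst w) / r) by (field; lra).
    replace ((snd z - r) / r - (snd w - r) / r) with ((snd z - snd w) / r) by (field; lra).
    unfold Rdiv. rewrite !Rabs_mult. rewrite (Rabs_right (/ r)) by (left; apply Rinv_0_lt_compat; lra).
    pose proof (dist2_ge_x z w). pose proof (dist2_ge_y z w).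
    assert (E : (Rabs (fst z - fst w) + Rabs (snd z - snd w)) * / r < eps).
    { apply Rmult_lt_reg_r with r. auto. rewrite Rmult_assoc, Rinv_l by lra. assert (0 < eps * r) by nra. lra. }
    lra.
  - apply Side; auto. lra.
  - rewrite dist2_sym. apply Side; auto. rewrite dist2_sym. lra.
  - rewrite !phi_off by auto. rewrite dist2_refl. lra.
Qed.

Definition nf (u : R) : nat := (Z.to_nat (up (/ u)) - 1)%nat.

Lemma inv_lt a b : 0 < a -> a < b -> / b < / a.
Proof. intros. apply Rinv_lt_contravar; nra. Qed.
Lemma inv_le a b : 0 < a -> a <= b -> / b <= / a.
Proof. intros. apply Rinv_le_contravar; lra. Qed.

Lemma INR_posn n : (1 <= n)%nat -> 0 < INR n.
Proof. intros. pose proof (INR_ge1 n H). lra. Qed.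

Lemma inv_INR_le1 n : (1 <= n)%nat -> / INR n <= 1.
Proof. intros Hn. pose proof (INR_ge1 n Hn). apply Rle_trans with (/ 1); [apply inv_le; lra | rewrite Rinv_1; lra]. Qed.

Lemma nf_spec n u : (1 <= n)%nat -> / INR (S n) < u <= / INR n -> nf u = n.
Proof.
  intros Hn [H1 H2]. pose proof (INR_posn n Hn). pose proof (INR_posn (S n) ltac:(lia)).
  assert (Hu : 0 < u) by (pose proof (Rinv_0_lt_compat _ H0); lra).
  assert (A1 : / u < INR (S n)) by (rewrite <- (Rinv_inv (INR (S n))); apply inv_lt; auto; apply Rinv_0_lt_compat; auto).
  assert (A2 : INR n <= / u) by (rewrite <- (Rinv_inv (INR n)); apply inv_le; auto).
  assert (E : Z.of_nat (S n) = up (/ u)).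
  { apply tech_up; rewrite <- INR_IZR_INZ; auto. rewrite S_INR in *. lra. }
  unfold nf. rewrite <- E. rewrite Nat2Z.id. lia.
Qed.

Lemma nf_range u : 0 < u <= 1 -> (1 <= nf u)%nat /\ / INR (S (nf u)) < u <= / INR (nf u).
Proof.
  intros [H1 H2]. destruct (archimed (/ u)) as [A1 A2].
  assert (Hiu : 1 <= / u) by (rewrite <- Rinv_1; apply inv_le; lra).
  set (z := up (/ u)) in *.
  assert (Hz : (0 <= z)%Z) by (apply le_IZR; simpl; lra).
  assert (E : IZR z = INR (Z.to_nat z)) by (rewrite INR_IZR_INZ, Z2Nat.id; auto).
  rewrite E in A1, A2. set (k := Z.to_nat z) in *.
  assert (Hk : (2 <= k)%nat).
  { destruct k as [|[|k]]; simpl in A1; try lra. lia. }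
  unfold nf. fold z. fold k.
  assert (Ek : INR (S (k - 1)) = INR k) by (f_equal; lia).
  assert (Ek' : INR (k - 1) = INR k - 1) by (rewrite minus_INR by lia; simpl; ring).
  split. lia. rewrite Ek, Ek'.
  assert (INR k >= 2) by (apply (le_INR 2) in Hk; simpl in Hk; lra).
  split.
  - rewrite <- (Rinv_inv u). apply inv_lt; auto. apply Rinv_0_lt_compat; lra.
  - rewrite <- (Rinv_inv u). apply inv_le; auto. lra. lra.
Qed.

Definition mid (n : nat) : R := (/ INR (S n) + / INR n) / 2.
Definition sp (n : nat) (u : R) : R := (u - mid n) / (/ INR n - mid n).
Definition circ (n : nat) (th : R) : pt :=
  (cos (2 * PI * th) / 2 ^ S n + / INR n, sin (2 * PI * th) / 2 ^ S n + / 2 ^ S n).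
Definition piece (S : nat -> bool) (n : nat) (u : R) : pt :=
  if S n then (if Rle_dec u (mid n) then (2 * u - / INR (Datatypes.S n), 0) else circ n (sp n u - / 4)) else (u, 0).
Definition fwd (S : nat -> bool) (u : R) : pt := if Rle_dec u 0 then (0, 0) else piece S (nf u) u.
Definition kS (S : nat -> bool) (t : R) : pt := if Rle_dec t (/ 2) then fwd S (2 * t) else (2 - 2 * t, 0).

Lemma inv_S_lt n : (1 <= n)%nat -> 0 < / INR (S n) < / INR n.
Proof.
  intros Hn. pose proof (INR_posn n Hn). rewrite S_INR. split. apply Rinv_0_lt_compat; lra.
  apply inv_lt; lra.
Qed.

Lemma mid_bounds n : (1 <= n)%nat -> / INR (S n) < mid n < / INR n.
Proof. intros Hn. pose proof (inv_S_lt n Hn). unfold mid. lra. Qed.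

Lemma circ_start n : circ n (- / 4) = (/ INR n, 0).
Proof.
  unfold circ. replace (2 * PI * - / 4) with (- (PI / 2)) by field.
  rewrite cos_neg, sin_neg, cos_PI2, sin_PI2. f_equal; unfold Rdiv; ring.
Qed.

Lemma circ_end n : circ n (3 / 4) = (/ INR n, 0).
Proof.
  unfold circ. replace (2 * PI * (3 / 4)) with (3 * (PI / 2)) by field.
  rewrite cos_3PI2, sin_3PI2. f_equal; unfold Rdiv; ring.
Qed.

Lemma circ_W n th : (1 <= n)%nat -> - / 4 <= th <= 3 / 4 -> W (circ n th).
Proof.
  intros Hn Hth. left. exists n.
  destruct (Rle_dec 0 th).
  - exists th. unfold circ; simpl. repeat split; auto; lra.
  - exists (th + 1). unfold circ; cbn [fst snd]. repeat split; auto; try lra.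
    + replace (2 * PI * (th + 1)) with (2 * PI * th + 2 * INR 1 * PI) by (simpl; ring). rewrite cos_period. auto.
    + replace (2 * PI * (th + 1)) with (2 * PI * th + 2 * INR 1 * PI) by (simpl; ring). rewrite sin_period. auto.
Qed.

Lemma sp_range n u : (1 <= n)%nat -> mid n <= u <= / INR n -> 0 <= sp n u <= 1.
Proof.
  intros Hn Hu. pose proof (mid_bounds n Hn). unfold sp. split.
  - apply Rdiv_le_0_compat; lra.
  - apply Rmult_le_reg_r with (/ INR n - mid n). lra. unfold Rdiv. rewrite Rmult_assoc, Rinv_l by lra. lra.
Qed.

Lemma piece_W S n u : (forall m, S m = true -> (8 <= m)%nat) -> (1 <= n)%nat ->
  / INR (Datatypes.S n) < u <= / INR n -> u <= 1 -> W (piece S n u).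
Proof.
  intros HS Hn Hu Hu1. pose proof (inv_S_lt n Hn). pose proof (mid_bounds n Hn). unfold piece.
  destruct (S n) eqn:ES.
  - destruct (Rle_dec u (mid n)).
    + right. cbn [fst snd]. split; auto. pose proof (INR_ge1 n Hn). assert (2 * mid n = / INR (Datatypes.S n) + / INR n) by (unfold mid; lra). pose proof (inv_INR_le1 n Hn). lra.
    + apply circ_W; auto. pose proof (sp_range n u Hn ltac:(lra)). lra.
  - right. simpl. lra.
Qed.

Lemma kS_W S t : (forall m, S m = true -> (8 <= m)%nat) -> unit_I t -> W (kS S t).
Proof.
  intros HS [H0 H1]. unfold kS. destruct (Rle_dec t (/ 2)).
  - unfold fwd. destruct (Rle_dec (2 * t) 0). right; simpl; lra.
    destruct (nf_range (2 * t) ltac:(lra)) as [Hn Hr]. apply piece_W; auto. lra.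
  - right. simpl. lra.
Qed.

Lemma kS_0 S : kS S 0 = origin.
Proof. unfold kS, fwd. destruct (Rle_dec 0 (/2)); [|lra]. destruct (Rle_dec (2 * 0) 0); [reflexivity|lra]. Qed.

Lemma kS_1 S : kS S 1 = origin.
Proof. unfold kS. destruct (Rle_dec 1 (/2)); [lra|]. unfold origin. f_equal. ring. Qed.

Lemma piece_left S n : (1 <= n)%nat -> piece S n (/ INR (Datatypes.S n)) = (/ INR (Datatypes.S n), 0).
Proof.
  intros Hn. pose proof (mid_bounds n Hn). unfold piece. destruct (S n). destruct (Rle_dec (/ INR (Datatypes.S n)) (mid n)); [|lra].
  f_equal; ring. auto.
Qed.

Lemma sp_end n : (1 <= n)%nat -> sp n (/ INR n) = 1.
Proof. intros Hn. pose proof (mid_bounds n Hn). unfold sp. set (b := / INR n) in *. field. lra. Qed.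

Lemma sp_start n : (1 <= n)%nat -> sp n (mid n) = 0.
Proof. intros Hn. pose proof (mid_bounds n Hn). unfold sp. set (b := / INR n) in *. field. lra. Qed.

Lemma piece_right S n : (1 <= n)%nat -> piece S n (/ INR n) = (/ INR n, 0).
Proof.
  intros Hn. pose proof (mid_bounds n Hn). unfold piece. destruct (S n). destruct (Rle_dec (/ INR n) (mid n)); [lra|].
  rewrite sp_end by auto. replace (1 - / 4) with (3 / 4) by field. apply circ_end. auto.
Qed.

Lemma fwd_piece S n u : (1 <= n)%nat -> / INR (Datatypes.S n) <= u <= / INR n -> fwd S u = piece S n u.
Proof.
  intros Hn Hu. pose proof (inv_S_lt n Hn). unfold fwd. destruct (Rle_dec u 0); [lra|].
  destruct (Req_dec u (/ INR (Datatypes.S n))) as [E|E].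
  - subst u. rewrite (nf_spec (Datatypes.S n)). rewrite piece_right, piece_left; auto. lia.
    pose proof (inv_S_lt (Datatypes.S n) ltac:(lia)). lra.
  - rewrite (nf_spec n); auto. lra.
Qed.

Lemma piece_cont S n : (1 <= n)%nat -> cont_on (/ INR (Datatypes.S n)) (/ INR n) (piece S n).
Proof.
  intros Hn. pose proof (mid_bounds n Hn). destruct (S n) eqn:ES.
  - apply cont_paste with (mid n); try lra.
    + apply cont_ext with (fun u => (2 * u - / INR (Datatypes.S n), 0)).
      { intros x Hx. unfold piece. rewrite ES. destruct (Rle_dec x (mid n)); [auto|lra]. }
      apply cont_comp; intros; reg.
    + apply cont_ext with (fun u => circ n (sp n u - / 4)).
      { intros x Hx. unfold piece. rewrite ES. destruct (Rle_dec x (mid n)); [|auto].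
        assert (x = mid n) by lra. subst x. rewrite sp_start by auto. replace (0 - / 4) with (- / 4) by ring.
        rewrite circ_start. f_equal. unfold mid. lra. }
      unfold circ, sp. apply cont_comp; intros; reg.
  - apply cont_ext with (fun u => (u, 0)). { intros. unfold piece. rewrite ES. auto. }
    apply cont_comp; intros; reg.
Qed.

Lemma fwd_cont_piece S n : (1 <= n)%nat -> cont_on (/ INR (Datatypes.S n)) (/ INR n) (fwd S).
Proof. intros Hn. apply cont_ext with (piece S n). intros x Hx; apply fwd_piece; auto. apply piece_cont; auto. Qed.

Lemma glue g C : (forall n, (1 <= n)%nat -> cont_on (/ INR (Datatypes.S n)) (/ INR n) g) -> g 0 = origin -> C > 0 ->
  (forall u, 0 < u <= 1 -> dist2 (g u) origin <= C * u) -> cont_on 0 1 g.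
Proof.
  intros Hp H0 HC Hb.
  assert (Hall : forall n, (1 <= n)%nat -> cont_on (/ INR (Datatypes.S n)) 1 g).
  { intros n Hn. induction Hn.
    - pose proof (Hp 1%nat (le_n 1)) as K. change (INR 1) with 1 in K. rewrite Rinv_1 in K. exact K.
    - apply cont_paste with (/ INR (Datatypes.S m)).
      + pose proof (inv_S_lt (Datatypes.S m) ltac:(lia)). lra.
      + pose proof (inv_INR_le1 (Datatypes.S m) ltac:(lia)). lra.
      + apply Hp. lia.
      + auto. }
  intros t Ht eps Heps.
  destruct (Rle_lt_dec t 0) as [Ht0|Ht0].
  - assert (t = 0) by lra. subst t. exists (eps / C). split. apply Rdiv_lt_0_compat; lra.
    intros s Hs Hst. rewrite H0. destruct (Req_dec s 0) as [E|E]. { subst s. rewrite H0, dist2_refl. lra. }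
    eapply Rle_lt_trans. apply Hb. lra. rewrite Rminus_0_r, Rabs_right in Hst by lra.
    apply Rmult_lt_reg_r with (/ C). apply Rinv_0_lt_compat; lra.
    replace (C * s * / C) with s by (field; lra). exact Hst.
  - destruct (nf_range t ltac:(lra)) as [Hn [Hl Hr]].
    destruct (Hall (nf t) Hn t ltac:(lra) eps Heps) as [d [Hd G]].
    exists (Rmin d (t - / INR (Datatypes.S (nf t)))). split. { apply Rmin_glb_lt; lra. }
    intros s Hs Hst. pose proof (Rmin_l d (t - / INR (Datatypes.S (nf t)))). pose proof (Rmin_r d (t - / INR (Datatypes.S (nf t)))).
    apply G. apply Rabs_lt_between in Hst. lra. lra.
Qed.

Lemma INR_le_pow n : INR n <= 2 ^ n.
Proof.
  induction n. simpl; lra. rewrite S_INR. simpl.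
  assert (1 <= 2 ^ n) by (apply pow_R1_Rle; lra). lra.
Qed.

Lemma fwd_bound S u : 0 < u <= 1 -> dist2 (fwd S u) origin <= 6 * u.
Proof.
  intros Hu. destruct (nf_range u Hu) as [Hn [Hl Hr]]. set (n := nf u) in *.
  rewrite (fwd_piece S n u Hn ltac:(lra)).
  pose proof (INR_posn n Hn). rewrite S_INR in Hl.
  assert (Hb : / INR n <= 2 * / (INR n + 1)).
  { apply Rmult_le_reg_r with (INR n * (INR n + 1)). nra. replace (/ INR n * (INR n * (INR n + 1))) with (INR n + 1) by (field; lra). replace (2 * / (INR n + 1) * (INR n * (INR n + 1))) with (2 * INR n) by (field; lra). pose proof (INR_ge1 n Hn). lra. }
  pose proof (inv_S_lt n Hn) as Hab. rewrite S_INR in Hab.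
  eapply Rle_trans. apply dist2_le. unfold origin. cbn [fst snd].
  unfold piece. destruct (S n).
  - destruct (Rle_dec u (mid n)).
    + cbn [fst snd]. rewrite Rminus_0_r, Rminus_0_r, Rabs_R0. rewrite Rabs_right; [|pose proof (mid_bounds n Hn); rewrite S_INR in *; lra]. rewrite S_INR. lra.
    + unfold circ. cbn [fst snd]. rewrite !Rminus_0_r.
      pose proof (pow2_pos (Datatypes.S n)). set (P := 2 ^ Datatypes.S n) in *.
      assert (HP : 2 * INR n <= P). { unfold P. simpl. pose proof (INR_le_pow n). lra. }
      assert (HiP : / P <= / (2 * INR n)) by (apply inv_le; lra).
      assert (E : / (2 * INR n) = / INR n / 2) by (field; lra). rewrite E in HiP.
      pose proof (COS_bound (2 * PI * (sp n u - / 4))). pose proof (SIN_bound (2 * PI * (sp n u - / 4))).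
      set (c := cos (2 * PI * (sp n u - / 4))) in *. set (s := sin (2 * PI * (sp n u - / 4))) in *.
      assert (Hip : 0 < / P) by (apply Rinv_0_lt_compat; lra).
      assert (Rabs (c / P + / INR n) <= / P + / INR n).
      { apply Rabs_le_between. unfold Rdiv. split; nra. }
      assert (Rabs (s / P + / P) <= 2 * / P).
      { apply Rabs_le_between. unfold Rdiv. split; nra. }
      lra.
  - cbn [fst snd]. rewrite !Rminus_0_r, Rabs_R0, Rabs_right by lra. lra.
Qed.

Lemma fwd_cont S : cont_on 0 1 (fwd S).
Proof.
  apply glue with 6. intros n Hn. apply fwd_cont_piece; auto.
  unfold fwd. destruct (Rle_dec 0 0); [reflexivity|lra]. lra. apply fwd_bound.
Qed.

Lemma kS_cont S : cont_on 0 1 (kS S).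
Proof.
  apply cont_paste with (/ 2); try lra.
  - apply cont_ext with (fun t => fwd S (2 * t + 0)).
    { intros x Hx. unfold kS. destruct (Rle_dec x (/2)); [|lra]. f_equal; ring. }
    apply cont_affine. apply fwd_cont. intros; lra.
  - apply cont_ext with (fun t => (2 - 2 * t, 0)).
    { intros x Hx. unfold kS. destruct (Rle_dec x (/2)); [|auto].
      assert (x = / 2) by lra. subst x. replace (2 * / 2) with (/ INR 1) by (simpl; field).
      rewrite (fwd_piece S 1); [|lia|split; [left; apply (inv_S_lt 1); lia|lra]].
      rewrite piece_right by lia. simpl. f_equal; field. }
    apply cont_comp; intros; reg.
Qed.

Lemma kS_loop S : (forall m, S m = true -> (8 <= m)%nat) -> loopW (kS S).
Proof.
  intros HS. split. apply kS_cont. split. intros t Ht. apply kS_W; auto. split. apply kS_0. apply kS_1.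
Qed.

Lemma circ_inj a b : cos a = cos b -> sin a = sin b -> Rabs (a - b) < 2 * PI -> a = b.
Proof.
  intros Hc Hs Hab.
  assert (H1 : cos (a - b) = 1).
  { rewrite cos_minus, Hc, Hs. pose proof (sin2_cos2 b). unfold Rsqr in H. lra. }
  replace (a - b) with (2 * ((a - b) / 2)) in H1 by field. rewrite cos_2a_sin in H1.
  assert (H2 : sin ((a - b) / 2) = 0) by nra.
  destruct (sin_eq_0_0 _ H2) as [k Hk].
  apply Rabs_lt_between in Hab. pose proof PI_RGT_0.
  assert (- PI < IZR k * PI < PI) by (rewrite <- Hk; lra).
  assert (-1 < IZR k < 1) by (split; nra).
  assert (k = 0%Z) by (destruct H3; apply lt_IZR in H3; apply lt_IZR in H4; lia).
  subst k. simpl in Hk. lra.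
Qed.

Lemma finite_of_le1 (P : R -> Prop) : (forall t1 t2, P t1 -> P t2 -> t1 = t2) -> exists l, forall t, P t -> In t l.
Proof.
  intros H. destruct (classic (exists t, P t)) as [[t0 Ht0]|N].
  - exists (t0 :: nil). intros t Ht. left. symmetry. auto.
  - exists nil. intros t Ht. apply N. eauto.
Qed.

Lemma kS_cases S t : (forall m, S m = true -> (8 <= m)%nat) -> unit_I t ->
  (snd (kS S t) = 0 /\ (t = fst (kS S t) / 2 \/ t = (fst (kS S t) + / INR (Datatypes.S (nf (fst (kS S t))))) / 4 \/ t = 1 - fst (kS S t) / 2))
  \/ (snd (kS S t) <> 0 /\ exists n th, S n = true /\ (8 <= n)%nat /\ - / 4 < th <= 3 / 4 /\ kS S t = circ n th /\
        t = (mid n + (th + / 4) * (/ INR n - mid n)) / 2).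
Proof.
  intros HS [Ht0 Ht1]. unfold kS. destruct (Rle_dec t (/ 2)) as [Hh|Hh].
  - unfold fwd. destruct (Rle_dec (2 * t) 0) as [Hz|Hz].
    + left. simpl. split; auto. left. lra.
    + destruct (nf_range (2 * t) ltac:(lra)) as [Hn [Hl Hr]]. set (n := nf (2 * t)) in *.
      pose proof (mid_bounds n Hn) as Hm. pose proof (inv_S_lt n Hn).
      unfold piece. destruct (S n) eqn:ES.
      * destruct (Rle_dec (2 * t) (mid n)) as [r1|r1].
        -- left. cbn [fst snd]. split; auto. right; left.
           rewrite (nf_spec n). lra. auto. unfold mid in Hm. unfold mid in r1. lra.
        -- assert (Hsp : 0 < sp n (2 * t) <= 1).
           { split. unfold sp. apply Rdiv_lt_0_compat; lra. apply (sp_range n); auto. lra. }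
           set (th := sp n (2 * t) - / 4).
           assert (Et : t = (mid n + (th + / 4) * (/ INR n - mid n)) / 2).
           { unfold th, sp. set (b := / INR n) in *. field. lra. }
           destruct (Req_dec (snd (circ n th)) 0) as [E0|E0].
           ++
              assert (Hsin : sin (2 * PI * th) = -1).
              { unfold circ in E0. cbn [snd] in E0. pose proof (pow2_pos (Datatypes.S n)).
                assert (EE : sin (2 * PI * th) + 1 = (sin (2 * PI * th) / 2 ^ Datatypes.S n + / 2 ^ Datatypes.S n) * 2 ^ Datatypes.S n) by (field; lra).
                rewrite E0 in EE. lra. }
              assert (Hcos : cos (2 * PI * th) = 0).
              { pose proof (sin2_cos2 (2 * PI * th)). rewrite Hsin in H0. unfold Rsqr in H0. nra. }
              assert (Hth : 2 * PI * th = 2 * PI * (3 / 4)).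
              { apply circ_inj.
                - rewrite Hcos. replace (2 * PI * (3 / 4)) with (3 * (PI / 2)) by field. rewrite cos_3PI2; auto.
                - rewrite Hsin. replace (2 * PI * (3 / 4)) with (3 * (PI / 2)) by field. rewrite sin_3PI2; auto.
                - pose proof PI_RGT_0. apply Rabs_lt_between. unfold th in *. nra. }
              assert (th = 3 / 4) by (pose proof PI_RGT_0; nra).
              assert (Ht' : t = / INR n / 2) by (rewrite Et, H0; lra).
              left. split; auto. left. rewrite H0, circ_end. cbn [fst]. exact Ht'.
           ++ right. split; auto. exists n, th. repeat split; auto. unfold th. lra. unfold th. lra.
      * left. cbn [fst snd]. split; auto. left. lra.
  - left. cbn [fst snd]. split; auto. right; right. lra.
Qed.

Lemma sp_inj n u1 u2 : (1 <= n)%nat -> sp n u1 = sp n u2 -> u1 = u2.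
Proof.
  intros Hn H. pose proof (mid_bounds n Hn). unfold sp in H.
  set (b := / INR n) in *. set (m := mid n) in *.
  assert (E1 : u1 = (u1 - m) / (b - m) * (b - m) + m) by (field; lra).
  assert (E2 : u2 = (u2 - m) / (b - m) * (b - m) + m) by (field; lra).
  rewrite E1, E2, H. reflexivity.
Qed.

Lemma kS_fibres S : (forall m, S m = true -> (8 <= m)%nat) -> finite_fibres (kS S).
Proof.
  intros HS p. destruct (Req_dec (snd p) 0) as [Hp|Hp].
  - exists (fst p / 2 :: (fst p + / INR (Datatypes.S (nf (fst p)))) / 4 :: 1 - fst p / 2 :: nil).
    intros t Ht Hk. destruct (kS_cases S t HS Ht) as [[_ H]|[H _]]; rewrite Hk in *; [|contradiction].
    destruct H as [E|[E|E]]; rewrite E; simpl; auto.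
  - destruct (finite_of_le1 (fun t => unit_I t /\ kS S t = p)) as [l Hl]; [|exists l; intros t Ht Hk; apply Hl; auto].
    intros t1 t2 [H1 K1] [H2 K2].
    destruct (kS_cases S t1 HS H1) as [[E _]|[_ [n1 [th1 [S1 [N1 [T1 [C1 E1]]]]]]]]; [rewrite K1 in E; contradiction|].
    destruct (kS_cases S t2 HS H2) as [[E _]|[_ [n2 [th2 [S2 [N2 [T2 [C2 E2]]]]]]]]; [rewrite K2 in E; contradiction|].
    rewrite K1 in C1. rewrite K2 in C2.
    assert (n1 = n2).
    { destruct (Nat.eq_dec n1 n2) as [e|e]; auto. exfalso.
      pose proof (circ_dist n1 th1) as D1. pose proof (circ_dist n2 th2) as D2.
      fold (circ n1 th1) in D1. fold (circ n2 th2) in D2. rewrite <- C1 in D1. rewrite <- C2 in D2.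
      pose proof (onC_x _ _ D1). pose proof (onC_x _ _ D2).
      pose proof (sep n1 n2 (fst p) N1 ltac:(lia) ltac:(lia) H0). unfold rr in H.
      pose proof (pow2_pos (Datatypes.S n1)). assert (0 < / 2 ^ Datatypes.S n1) by (apply Rinv_0_lt_compat; auto). lra. }
    subst n2.
    assert (Hth : th1 = th2).
    { rewrite C1 in C2. pose proof (f_equal fst C2) as Ec. pose proof (f_equal snd C2) as Es. unfold circ in Ec, Es. cbn [fst snd] in Ec, Es. pose proof (pow2_pos (Datatypes.S n1)).
      assert (cos (2 * PI * th1) = cos (2 * PI * th2)).
      { apply Rmult_eq_reg_r with (/ 2 ^ Datatypes.S n1). unfold Rdiv in Ec. lra. apply Rgt_not_eq, Rinv_0_lt_compat. auto. }
      assert (sin (2 * PI * th1) = sin (2 * PI * th2)).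
      { apply Rmult_eq_reg_r with (/ 2 ^ Datatypes.S n1). unfold Rdiv in Es. lra. apply Rgt_not_eq, Rinv_0_lt_compat. auto. }
      assert (2 * PI * th1 = 2 * PI * th2). { apply circ_inj; auto. pose proof PI_RGT_0. apply Rabs_lt_between. nra. }
      pose proof PI_RGT_0. nra. }
    subst th2. lra.
Qed.

Lemma kS_omega S : (forall m, S m = true -> (8 <= m)%nat) -> omega_loop (kS S).
Proof. intros HS. split. apply kS_loop; auto. apply kS_fibres; auto. Qed.

Lemma phi_seg n z : snd z = 0 -> phi n z = (0, -1).
Proof.
  intros Hz. unfold phi. destruct (Req_EM_T (dist2 z (cen n)) (rr n)) as [E|E]; auto.
  pose proof (dist2_sq z (cen n)). rewrite E in H. unfold cen in H. cbn [fst snd] in H. fold (rr n) in H.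
  rewrite Hz in *. pose proof (rr_pos n).
  assert (E2 : (fst z - / INR n) ^ 2 = 0) by nra.
  assert (E3 : fst z - / INR n = 0) by nra.
  rewrite E3. f_equal. unfold Rdiv; ring. field. lra.
Qed.

Lemma phi_other n m th : (8 <= n)%nat -> (1 <= m)%nat -> m <> n -> phi n (circ m th) = (0, -1).
Proof.
  intros Hn Hm Hmn. apply phi_off. intros E.
  pose proof (circ_dist m th) as D. fold (circ m th) in D.
  pose proof (onC_x _ _ D). pose proof (onC_x _ _ E). unfold rr in *.
  pose proof (sep n m _ Hn Hm Hmn H).
  pose proof (pow2_pos (Datatypes.S n)). assert (0 < / 2 ^ Datatypes.S n) by (apply Rinv_0_lt_compat; auto). lra.
Qed.

Definition clamp (x : R) : R := Rmax 0 (Rmin x 1).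
Definition theta (S : nat -> bool) (n : nat) (t : R) : R :=
  if S n then - (PI / 2) + 2 * PI * clamp ((2 * t - mid n) / (/ INR n - mid n)) else - (PI / 2).

Lemma clamp_lip x y : Rabs (clamp x - clamp y) <= Rabs (x - y).
Proof.
  pose proof (Rle_abs (x - y)). pose proof (Rle_abs (- (x - y))). rewrite Rabs_Ropp in H0.
  unfold clamp, Rmax, Rmin.
  destruct (Rle_dec x 1); destruct (Rle_dec y 1);
  repeat match goal with |- context [Rle_dec ?a ?b] => destruct (Rle_dec a b) end;
  apply Rabs_le_between; lra.
Qed.

Lemma clamp0 x : x <= 0 -> clamp x = 0.
Proof. intros. unfold clamp, Rmax, Rmin. destruct (Rle_dec x 1); repeat match goal with |- context [Rle_dec ?a ?b] => destruct (Rle_dec a b) end; lra. Qed.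
Lemma clamp1 x : 1 <= x -> clamp x = 1.
Proof. intros. unfold clamp, Rmax, Rmin. destruct (Rle_dec x 1); repeat match goal with |- context [Rle_dec ?a ?b] => destruct (Rle_dec a b) end; lra. Qed.
Lemma clampid x : 0 <= x <= 1 -> clamp x = x.
Proof. intros. unfold clamp, Rmax, Rmin. destruct (Rle_dec x 1); repeat match goal with |- context [Rle_dec ?a ?b] => destruct (Rle_dec a b) end; lra. Qed.

Lemma rot_bottom : rot (- (PI / 2)) = (0, -1).
Proof. unfold rot. rewrite cos_neg, sin_neg, cos_PI2, sin_PI2. auto. Qed.
Lemma rot_bottom2 : rot (- (PI / 2) + 2 * PI * 1) = (0, -1).
Proof. unfold rot. replace (- (PI / 2) + 2 * PI * 1) with (3 * (PI / 2)) by field. rewrite cos_3PI2, sin_3PI2. auto. Qed.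

Lemma phi_kS S n t : (forall m, S m = true -> (8 <= m)%nat) -> (8 <= n)%nat -> unit_I t ->
  phi n (kS S t) = rot (theta S n t).
Proof.
  intros HS Hn Ht. assert (Hn1 : (1 <= n)%nat) by lia.
  pose proof (mid_bounds n Hn1) as Hm. pose proof (inv_S_lt n Hn1) as Hab. pose proof (inv_INR_le1 n Hn1) as Hb1.
  destruct (classic (S n = true /\ mid n < 2 * t < / INR n)) as [[ES Hin]|Hout].
  - unfold theta. rewrite ES.
    assert (Hsp : 0 <= sp n (2 * t) <= 1) by (apply sp_range; auto; lra).
    assert (K : kS S t = circ n (sp n (2 * t) - / 4)).
    { unfold kS. destruct (Rle_dec t (/ 2)); [|lra]. rewrite (fwd_piece S n); [|auto|lra].
      unfold piece. rewrite ES. destruct (Rle_dec (2 * t) (mid n)); [lra|auto]. }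
    rewrite K. rewrite phi_on by (apply circ_dist).
    fold (sp n (2 * t)). rewrite clampid by auto.
    unfold circ, rot, rr. cbn [fst snd]. pose proof (pow2_pos (Datatypes.S n)).
    set (b := / INR n). set (P := 2 ^ Datatypes.S n) in *.
    replace (- (PI / 2) + 2 * PI * sp n (2 * t)) with (2 * PI * (sp n (2 * t) - / 4)) by field.
    f_equal; field; lra.
  - assert (Hphi : phi n (kS S t) = (0, -1)).
    { destruct (kS_cases S t HS Ht) as [[E _]|[Hne [n' [th [S' [N' [T' [C' E']]]]]]]].
      - apply phi_seg; auto.
      - rewrite C'. destruct (Nat.eq_dec n' n) as [e|e].
        + subst n'. exfalso. pose proof (mid_bounds n Hn1).
          assert (2 * t = / INR n).
          { destruct (classic (2 * t = / INR n)); auto. exfalso. apply Hout. split; auto. split; nra. }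
          assert (th = 3 / 4) by nra. subst th. rewrite C', circ_end in Hne. apply Hne. reflexivity.
        + apply phi_other; auto. lia. }
    rewrite Hphi. unfold theta. destruct (S n) eqn:ES.
    + destruct (Rle_dec (2 * t) (mid n)).
      * rewrite clamp0. rewrite Rmult_0_r, Rplus_0_r. symmetry; apply rot_bottom.
        apply Rmult_le_reg_r with (/ INR n - mid n). lra. unfold Rdiv. rewrite Rmult_assoc, Rinv_l by lra. lra.
      * rewrite clamp1. symmetry; apply rot_bottom2.
        assert (/ INR n <= 2 * t) by (destruct (Rle_dec (/ INR n) (2 * t)); auto; exfalso; apply Hout; split; auto; lra).
        apply Rmult_le_reg_r with (/ INR n - mid n). lra. unfold Rdiv. rewrite Rmult_assoc, Rinv_l by lra. lra.
    + symmetry; apply rot_bottom.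
Qed.

Definition Lc (n : nat) : R := 4 * PI / (/ INR n - mid n).

Lemma theta_lip S n t t' : (1 <= n)%nat -> Rabs (theta S n t - theta S n t') <= Lc n * Rabs (t - t').
Proof.
  intros Hn. pose proof (mid_bounds n Hn). pose proof PI_RGT_0. unfold theta, Lc. set (d := / INR n - mid n) in *.
  assert (Hd : 0 < d) by (unfold d; lra).
  destruct (S n).
  - replace (- (PI / 2) + 2 * PI * clamp ((2 * t - mid n) / d) - (- (PI / 2) + 2 * PI * clamp ((2 * t' - mid n) / d)))
      with (2 * PI * (clamp ((2 * t - mid n) / d) - clamp ((2 * t' - mid n) / d))) by ring.
    rewrite Rabs_mult, (Rabs_right (2 * PI)) by lra.
    pose proof (clamp_lip ((2 * t - mid n) / d) ((2 * t' - mid n) / d)).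
    replace ((2 * t - mid n) / d - (2 * t' - mid n) / d) with ((t - t') * (2 / d)) in H1 by (field; lra).
    rewrite Rabs_mult, (Rabs_right (2 / d)) in H1 by (apply Rle_ge; apply Rdiv_le_0_compat; lra).
    replace (4 * PI / d * Rabs (t - t')) with (2 * PI * (Rabs (t - t') * (2 / d))) by (field; lra).
    apply Rmult_le_compat_l; lra.
  - replace (- (PI / 2) - - (PI / 2)) with 0 by ring. rewrite Rabs_R0.
    apply Rmult_le_pos. apply Rdiv_le_0_compat; lra. apply Rabs_pos.
Qed.

Lemma Dsum_ext a b N : (forall i, (i <= N)%nat -> a i = b i) -> Dsum a N = Dsum b N.
Proof. intros H. unfold Dsum. apply sumN_ext. intros i Hi. rewrite !H by lia. auto. Qed.

Lemma cj_rot x : cj (rot x) = rot (- x).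
Proof. unfold cj, rot; simpl. rewrite cos_neg, sin_neg. auto. Qed.

Lemma Dsum_rot (th : nat -> R) N : (forall i, (i < N)%nat -> Rabs (th (S i) - th i) < PI / 2) ->
  Dsum (fun i => rot (th i)) N = th N - th O.
Proof.
  intros H. unfold Dsum. apply sumN_tele'. intros i Hi.
  rewrite cj_rot, cm_rot. apply Arg_rot. specialize (H i Hi). apply Rabs_lt_between in H.
  replace (th (S i) + - th i) with (th (S i) - th i) by ring. lra.
Qed.

Lemma grid_I i N : (1 <= N)%nat -> (i <= N)%nat -> unit_I (INR i / INR N).
Proof.
  intros HN Hi. pose proof (INR_posn N HN). split.
  - apply Rdiv_le_0_compat; auto. apply pos_INR.
  - apply Rmult_le_reg_r with (INR N); auto. unfold Rdiv. rewrite Rmult_assoc, Rinv_l by lra. rewrite Rmult_1_r, Rmult_1_l. apply le_INR; auto.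
Qed.

Lemma grid_step i N : (1 <= N)%nat -> INR (S i) / INR N - INR i / INR N = / INR N.
Proof. intros HN. pose proof (INR_posn N HN). rewrite S_INR. field. lra. Qed.

Lemma D_kS S n N : (forall m, S m = true -> (8 <= m)%nat) -> (8 <= n)%nat -> (1 <= N)%nat ->
  Lc n * / INR N < PI / 2 ->
  Dsum (fun i => phi n (kS S (INR i / INR N))) N = if S n then 2 * PI else 0.
Proof.
  intros HS Hn HN HL. assert (Hn1 : (1 <= n)%nat) by lia. pose proof (INR_posn N HN).
  rewrite (Dsum_ext _ (fun i => rot (theta S n (INR i / INR N)))).
  2: { intros i Hi. apply phi_kS; auto. apply grid_I; auto. }
  rewrite (Dsum_rot (fun i => theta S n (INR i / INR N))).
  - replace (INR N / INR N) with 1 by (field; lra). replace (INR 0 / INR N) with 0 by (simpl; field; lra).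
    pose proof (mid_bounds n Hn1). pose proof (inv_INR_le1 n Hn1). pose proof (inv_S_lt n Hn1).
    unfold theta. destruct (S n).
    + rewrite clamp1, clamp0. ring.
      * apply Rmult_le_reg_r with (/ INR n - mid n). lra. unfold Rdiv. rewrite Rmult_assoc, Rinv_l by lra. lra.
      * apply Rmult_le_reg_r with (/ INR n - mid n). lra. unfold Rdiv. rewrite Rmult_assoc, Rinv_l by lra. lra.
    + ring.
  - intros i Hi. eapply Rle_lt_trans. apply theta_lip; auto. rewrite grid_step by auto.
    rewrite Rabs_right. auto. left. apply Rinv_0_lt_compat; auto.
Qed.

Lemma big_nat K : exists N : nat, (1 <= N)%nat /\ K < INR N.
Proof.
  destruct (archimed (Rabs K)) as [A1 A2].
  assert (Hz : (0 <= up (Rabs K))%Z) by (apply le_IZR; simpl; pose proof (Rabs_pos K); lra).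
  exists (S (Z.to_nat (up (Rabs K)))). split. lia.
  rewrite S_INR, INR_IZR_INZ, Z2Nat.id by auto. pose proof (Rle_abs K). lra.
Qed.

Lemma not_homotopic S1 S2 n : (forall m, S1 m = true -> (8 <= m)%nat) -> (forall m, S2 m = true -> (8 <= m)%nat) ->
  (8 <= n)%nat -> S1 n <> S2 n -> ~ homotopic (kS S1) (kS S2).
Proof.
  intros HS1 HS2 Hn E12 [H [Hc [HW [H0 [H1 Hend]]]]].
  destruct (phi_unif n Hn (1/4) ltac:(lra)) as [dp [Hdp Gp]].
  destruct (unif2 H Hc dp Hdp) as [dH [HdH GH]].
  pose proof PI_RGT_0.
  destruct (big_nat (/ dH + 2 * Lc n / PI + 1)) as [N [HN HK]].
  pose proof (INR_posn N HN) as HNp.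
  assert (Lc0 : 0 <= Lc n).
  { unfold Lc. pose proof (mid_bounds n ltac:(lia)). apply Rdiv_le_0_compat; lra. }
  assert (HNd : / INR N < dH).
  { assert (0 <= 2 * Lc n / PI) by (apply Rdiv_le_0_compat; lra).
    assert (/ dH < INR N) by lra. rewrite <- (Rinv_inv dH). apply inv_lt; auto. apply Rinv_0_lt_compat; auto. }
  assert (HNL : Lc n * / INR N < PI / 2).
  { assert (0 < / dH) by (apply Rinv_0_lt_compat; auto).
    assert (2 * Lc n / PI < INR N) by lra.
    apply Rmult_lt_reg_r with (INR N); auto. rewrite Rmult_assoc, Rinv_l by lra.
    apply Rmult_lt_reg_r with (2 / PI). apply Rdiv_lt_0_compat; lra.
    replace (Lc n * 1 * (2 / PI)) with (2 * Lc n / PI) by (field; lra).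
    replace (PI / 2 * INR N * (2 / PI)) with (INR N) by (field; lra). auto. }
  set (G := fun j i => phi n (H (INR j / INR N) (INR i / INR N))).
  assert (Step : forall j, (j < N)%nat -> Dsum (G j) N = Dsum (G (S j)) N).
  { intros j Hj. apply Dsum_invariant.
    - intros i Hi. split; apply unit_phi.
    - intros i Hi. pose proof (grid_I i N HN ltac:(lia)). pose proof (grid_I (S i) N HN ltac:(lia)).
      pose proof (grid_I j N HN ltac:(lia)). pose proof (grid_I (S j) N HN ltac:(lia)).
      assert (Ht : Rabs (INR (S i) / INR N - INR i / INR N) < dH).
      { rewrite grid_step by auto. rewrite Rabs_right; auto. left; apply Rinv_0_lt_compat; auto. }
      assert (Hs0 : forall s, Rabs (s - s) < dH) by (intros; replace (s - s) with 0 by ring; rewrite Rabs_R0; auto).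
      split; unfold G; apply Gp; try apply HW; auto; apply GH; auto.
    - intros i Hi. pose proof (grid_I i N HN ltac:(lia)).
      pose proof (grid_I j N HN ltac:(lia)). pose proof (grid_I (S j) N HN ltac:(lia)).
      assert (Hs : Rabs (INR (S j) / INR N - INR j / INR N) < dH).
      { rewrite grid_step by auto. rewrite Rabs_right; auto. left; apply Rinv_0_lt_compat; auto. }
      assert (Ht0 : forall s, Rabs (s - s) < dH) by (intros; replace (s - s) with 0 by ring; rewrite Rabs_R0; auto).
      unfold G; apply Gp; try apply HW; auto; apply GH; auto.
    - unfold G. replace (INR 0 / INR N) with 0 by (simpl; field; lra).
      rewrite (proj1 (Hend _ (grid_I j N HN ltac:(lia)))). rewrite (proj1 (Hend _ (grid_I (S j) N HN ltac:(lia)))). auto.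
    - unfold G. replace (INR N / INR N) with 1 by (field; lra).
      rewrite (proj2 (Hend _ (grid_I j N HN ltac:(lia)))). rewrite (proj2 (Hend _ (grid_I (S j) N HN ltac:(lia)))). auto. }
  assert (All : forall j, (j <= N)%nat -> Dsum (G O) N = Dsum (G j) N).
  { intros j Hj. induction j. auto. rewrite IHj by lia. apply Step. lia. }
  specialize (All N (le_n N)).
  assert (F0 : Dsum (G O) N = Dsum (fun i => phi n (kS S1 (INR i / INR N))) N).
  { apply Dsum_ext. intros i Hi. unfold G. replace (INR 0 / INR N) with 0 by (simpl; field; lra).
    rewrite H0. auto. apply grid_I; auto. }
  assert (FN : Dsum (G N) N = Dsum (fun i => phi n (kS S2 (INR i / INR N))) N).
  { apply Dsum_ext. intros i Hi. unfold G. replace (INR N / INR N) with 1 by (field; lra).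
    rewrite H1. auto. apply grid_I; auto. }
  rewrite F0, FN, !D_kS in All; auto. destruct (S1 n), (S2 n); try lra; congruence.
Qed.

Definition qn (j : nat) : R :=
  let (a, bc) := Cantor.of_nat j in let (b, c) := Cantor.of_nat bc in (INR a - INR b) / INR (S c).

Lemma INR_Z m : INR (Z.to_nat m) - INR (Z.to_nat (- m)) = IZR m.
Proof.
  destruct (Z_le_gt_dec 0 m).
  - replace (Z.to_nat (- m)) with 0%nat by lia. rewrite INR_IZR_INZ, Z2Nat.id by auto. simpl. ring.
  - replace (Z.to_nat m) with 0%nat by lia. rewrite (INR_IZR_INZ (Z.to_nat (- m))), Z2Nat.id by lia.
    rewrite opp_IZR. simpl. ring.
Qed.

Lemma qn_dense x y : x < y -> exists j, x < qn j < y.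
Proof.
  intros Hxy. destruct (big_nat (/ (y - x))) as [c [Hc Hc2]].
  assert (Hc' : 0 < INR (S c)) by (apply lt_0_INR; lia).
  assert (Hcc : / INR (S c) < y - x).
  { rewrite <- (Rinv_inv (y - x)). apply inv_lt. apply Rinv_0_lt_compat; lra. rewrite S_INR. lra. }
  set (m := up (x * INR (S c))). destruct (archimed (x * INR (S c))) as [A1 A2]. fold m in A1, A2.
  exists (Cantor.to_nat (Z.to_nat m, Cantor.to_nat (Z.to_nat (- m), c))).
  unfold qn. rewrite !Cantor.cancel_of_to. rewrite INR_Z. split.
  - apply Rmult_lt_reg_r with (INR (S c)); auto. unfold Rdiv. rewrite Rmult_assoc, Rinv_l by lra. lra.
  - apply Rmult_lt_reg_r with (INR (S c)); auto. unfold Rdiv. rewrite Rmult_assoc, Rinv_l by lra.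
    apply Rmult_lt_compat_r with (r := INR (S c)) in Hcc; auto. rewrite Rinv_l in Hcc by lra. nra.
Qed.

Definition Sr (r : R) (n : nat) : bool :=
  if Nat.leb 8 n then (if Rlt_dec (qn (n - 8)) r then true else false) else false.

Lemma Sr_ok r m : Sr r m = true -> (8 <= m)%nat.
Proof. unfold Sr. destruct (Nat.leb 8 m) eqn:E. intros. apply Nat.leb_le; auto. discriminate. Qed.

Lemma Sr_sep r s : r < s -> exists n, (8 <= n)%nat /\ Sr r n <> Sr s n.
Proof.
  intros H. destruct (qn_dense r s H) as [j [Hj1 Hj2]]. exists (j + 8)%nat. split. lia.
  unfold Sr. replace (Nat.leb 8 (j + 8)) with true by (symmetry; apply Nat.leb_le; lia).
  replace (j + 8 - 8)%nat with j by lia.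
  destruct (Rlt_dec (qn j) r); destruct (Rlt_dec (qn j) s); try lra; discriminate.
Qed.

Lemma part1 : exists f : R -> (R -> pt),
     (forall r, in_Pomega (f r)) /\ (forall r s, homotopic (f r) (f s) -> r = s).
Proof.
  exists (fun r => kS (Sr r)). split.
  - intros r. apply Pom_gen. apply kS_omega. apply Sr_ok.
  - intros r s Hh. destruct (Rtotal_order r s) as [Hl|[He|Hg]]; auto; exfalso.
    + destruct (Sr_sep r s Hl) as [n [Hn Hne]]. apply (not_homotopic (Sr r) (Sr s) n (Sr_ok r) (Sr_ok s) Hn Hne Hh).
    + destruct (Sr_sep s r Hg) as [n [Hn Hne]]. apply (not_homotopic (Sr r) (Sr s) n (Sr_ok r) (Sr_ok s) Hn); auto.
Qed.

Lemma in_Pomega_loop k : in_Pomega k -> loopW k.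
Proof.
  induction 1.
  - destruct H; auto.
  - split. apply cont_const. split. intros; right; simpl; lra. split; reflexivity.
  - destruct IHin_Pomega1 as [C1 [W1 [A1 B1]]]. destruct IHin_Pomega2 as [C2 [W2 [A2 B2]]].
    split; [|split; [|split]].
    + apply (cont_paste 0 (/ 2) 1); try lra.
      * apply cont_ext with (fun t => k1 (2 * t + 0)).
        { intros x Hx. unfold Defs.concat. destruct (Rle_dec x (/ 2)); [|lra]. cbv beta; f_equal; ring. }
        apply cont_affine; auto. intros; lra.
      * apply cont_ext with (fun t => k2 (2 * t + -1)).
        { intros x Hx. unfold Defs.concat. destruct (Rle_dec x (/ 2)).
          - assert (x = / 2) by lra. subst x. replace (2 * / 2) with 1 by field. replace (1 + -1) with 0 by ring. congruence.
          - cbv beta; f_equal; ring. }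
        apply cont_affine; auto. intros; lra.
    + intros t Ht. unfold Defs.concat. destruct (Rle_dec t (/ 2)). apply W1; split; destruct Ht; lra. apply W2; split; destruct Ht; lra.
    + unfold Defs.concat. destruct (Rle_dec 0 (/ 2)); [|lra]. replace (2 * 0) with 0 by ring. auto.
    + unfold Defs.concat. destruct (Rle_dec 1 (/ 2)); [lra|]. replace (2 * 1 - 1) with 1 by ring. auto.
  - destruct IHin_Pomega as [C1 [W1 [A1 B1]]]. split; [|split; [|split]].
    + apply cont_ext with (fun t => k (-1 * t + 1)). { intros x Hx. unfold reverse. cbv beta; f_equal; ring. }
      apply cont_affine; auto. intros; lra.
    + intros t Ht. unfold reverse. apply W1. destruct Ht; split; lra.
    + unfold reverse. replace (1 - 0) with 1 by ring. auto.
    + unfold reverse. replace (1 - 1) with 0 by ring. auto.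
  - auto.
Qed.

Lemma qn_dense01 t d : 0 <= t <= 1 -> d > 0 -> exists j, 0 <= qn j <= 1 /\ Rabs (qn j - t) < d.
Proof.
  intros Ht Hd. destruct (Rlt_dec t 1).
  - destruct (qn_dense t (Rmin (t + d) 1)) as [j [Hj1 Hj2]]. { apply Rmin_glb_lt; lra. }
    pose proof (Rmin_l (t + d) 1). pose proof (Rmin_r (t + d) 1).
    exists j. split. lra. apply Rabs_lt_between; lra.
  - destruct (qn_dense (Rmax (1 - d) 0) 1) as [j [Hj1 Hj2]]. { apply Rmax_lub_lt; lra. }
    pose proof (Rmax_l (1 - d) 0). pose proof (Rmax_r (1 - d) 0).
    exists j. split. lra. apply Rabs_lt_between; lra.
Qed.

Lemma agree_dense k1 k2 : cont_on 0 1 k1 -> cont_on 0 1 k2 -> (forall j, k1 (qn j) = k2 (qn j)) ->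
  forall t, unit_I t -> k1 t = k2 t.
Proof.
  intros C1 C2 Hq t Ht. apply dist2_eq0.
  apply Rle_antisym; [|apply dist2_ge0].
  apply Rnot_lt_le. intros Hpos.
  set (e := dist2 (k1 t) (k2 t) / 3).
  destruct (C1 t Ht e ltac:(unfold e; lra)) as [d1 [Hd1 G1]].
  destruct (C2 t Ht e ltac:(unfold e; lra)) as [d2 [Hd2 G2]].
  destruct (qn_dense01 t (Rmin d1 d2) Ht ltac:(apply Rmin_glb_lt; lra)) as [j [Hj Hjt]].
  pose proof (Rmin_l d1 d2). pose proof (Rmin_r d1 d2).
  specialize (G1 (qn j) Hj ltac:(lra)). specialize (G2 (qn j) Hj ltac:(lra)).
  pose proof (dist2_tri (k1 t) (k1 (qn j)) (k2 t)).
  pose proof (dist2_tri (k1 (qn j)) (k2 (qn j)) (k2 t)).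
  assert (Z : dist2 (k1 (qn j)) (k2 (qn j)) = 0) by (rewrite Hq; apply dist2_refl).
  pose proof (dist2_sym (k1 t) (k1 (qn j))).
  unfold e in *. lra.
Qed.

Lemma homotopic_eq k1 k2 : loopW k1 -> (forall t, unit_I t -> k1 t = k2 t) -> homotopic k1 k2.
Proof.
  intros [C [HW [A B]]] E. exists (fun s t => k1 t). split; [|split; [|split; [|split]]].
  - intros s t Hs Ht eps Heps. destruct (C t Ht eps Heps) as [d [Hd G]]. exists d. split; auto.
    intros s' t' Hs' Ht' Hdd. apply G; auto. pose proof (dist2_ge_y (s', t') (s, t)). simpl in H. lra.
  - intros; auto.
  - intros; auto.
  - intros; auto.
  - intros; auto.
Qed.

Definition comp (e : nat) (p : pt) : R := match e with O => fst p | _ => snd p end.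

Definition code (k : R -> pt) (j : nat) : bool :=
  let (a, bc) := Cantor.of_nat j in let (c, e) := Cantor.of_nat bc in
  if Rlt_dec (qn c) (comp e (k (qn a))) then true else false.

Lemma code_inj k1 k2 : (forall j, code k1 j = code k2 j) -> forall a, k1 (qn a) = k2 (qn a).
Proof.
  intros H a.
  assert (Hc : forall e, comp e (k1 (qn a)) = comp e (k2 (qn a))).
  { intros e. set (v1 := comp e (k1 (qn a))). set (v2 := comp e (k2 (qn a))).
    destruct (Rtotal_order v1 v2) as [Hl|[He|Hg]]; auto; exfalso.
    - destruct (qn_dense v1 v2 Hl) as [c [Hc1 Hc2]].
      specialize (H (Cantor.to_nat (a, Cantor.to_nat (c, e)))). unfold code in H. rewrite !Cantor.cancel_of_to in H.
      fold v1 v2 in H. destruct (Rlt_dec (qn c) v1); destruct (Rlt_dec (qn c) v2); try lra; discriminate.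
    - destruct (qn_dense v2 v1 Hg) as [c [Hc1 Hc2]].
      specialize (H (Cantor.to_nat (a, Cantor.to_nat (c, e)))). unfold code in H. rewrite !Cantor.cancel_of_to in H.
      fold v1 v2 in H. destruct (Rlt_dec (qn c) v1); destruct (Rlt_dec (qn c) v2); try lra; discriminate. }
  pose proof (Hc O). pose proof (Hc 1%nat). simpl in *. destruct (k1 (qn a)), (k2 (qn a)). simpl in *. congruence.
Qed.

Definition term (b : nat -> bool) (j : nat) : R := if b j then / 3 ^ S j else 0.
Definition ps (b : nat -> bool) (N : nat) : R := sumN (term b) N.

Lemma pow3_pos k : 0 < 3 ^ k.
Proof. apply pow_lt; lra. Qed.

Lemma term_bounds b j : 0 <= term b j <= / 3 ^ S j.
Proof. unfold term. pose proof (pow3_pos (S j)). assert (0 < / 3 ^ S j) by (apply Rinv_0_lt_compat; auto). destruct (b j); lra. Qed.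

Lemma ps_tail b m k : ps b (m + k) - ps b m <= (/ 3 ^ m - / 3 ^ (m + k)) / 2.
Proof.
  induction k.
  - rewrite Nat.add_0_r. lra.
  - rewrite Nat.add_succ_r. unfold ps in *. simpl sumN. pose proof (term_bounds b (m + k)).
    assert (E : / 3 ^ S (m + k) = / 3 ^ (m + k) / 3) by (simpl; field; apply Rgt_not_eq, pow3_pos).
    rewrite E in *. lra.
Qed.

Lemma ps_mono b N M : (N <= M)%nat -> ps b N <= ps b M.
Proof.
  induction 1. lra. unfold ps in *. simpl. pose proof (term_bounds b m). lra.
Qed.

Lemma ps_bound b N : ps b N <= 1.
Proof.
  pose proof (ps_tail b 0 N). simpl in H. unfold ps in H at 2. simpl in H.
  pose proof (pow3_pos N). assert (0 < / 3 ^ N) by (apply Rinv_0_lt_compat; auto). lra.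
Qed.

Lemma ps_bounded b : bound (fun x => exists N, x = ps b N).
Proof. exists 1. intros x [N ->]. apply ps_bound. Qed.

Lemma ps_nonempty b : exists x, (fun x => exists N, x = ps b N) x.
Proof. exists (ps b 0). exists 0%nat. auto. Qed.

Definition enc (b : nat -> bool) : R := proj1_sig (completeness _ (ps_bounded b) (ps_nonempty b)).

Lemma enc_ge b N : ps b N <= enc b.
Proof. unfold enc. destruct (completeness _ (ps_bounded b) (ps_nonempty b)) as [m [H1 H2]]. simpl. apply H1. exists N; auto. Qed.

Lemma enc_le b c : (forall N, ps b N <= c) -> enc b <= c.
Proof. intros H. unfold enc. destruct (completeness _ (ps_bounded b) (ps_nonempty b)) as [m [H1 H2]]. simpl. apply H2. intros x [N ->]. auto. Qed.

Lemma first_diff (b b' : nat -> bool) j : b j <> b' j -> exists j0, b j0 <> b' j0 /\ forall i, (i < j0)%nat -> b i = b' i.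
Proof.
  induction j as [j IH] using lt_wf_ind. intros H.
  destruct (classic (exists i, (i < j)%nat /\ b i <> b' i)) as [[i [Hi Hb]]|N].
  - apply (IH i Hi Hb).
  - exists j. split; auto. intros i Hi. destruct (Bool.bool_dec (b i) (b' i)); auto. exfalso. apply N. eauto.
Qed.

Lemma enc_lt b b' j0 : b j0 = true -> b' j0 = false -> (forall i, (i < j0)%nat -> b i = b' i) -> enc b' < enc b.
Proof.
  intros Hb Hb' Hpre.
  assert (EA : ps b j0 = ps b' j0).
  { unfold ps. apply sumN_ext. intros i Hi. unfold term. rewrite Hpre; auto. }
  set (A := ps b j0) in *.
  pose proof (pow3_pos (S j0)). assert (0 < / 3 ^ S j0) by (apply Rinv_0_lt_compat; auto).
  assert (L : A + / 3 ^ S j0 <= enc b).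
  { pose proof (enc_ge b (S j0)). unfold ps in H1 at 1. simpl sumN in H1. fold (ps b j0) in H1. fold A in H1.
    unfold term in H1. rewrite Hb in H1. lra. }
  assert (U : enc b' <= A + / 3 ^ S j0 / 2).
  { apply enc_le. intros N. destruct (le_lt_dec N j0) as [HN|HN].
    - pose proof (ps_mono b' N j0 HN). lra.
    - pose proof (ps_tail b' (S j0) (N - S j0)). replace (S j0 + (N - S j0))%nat with N in H1 by lia.
      assert (ps b' (S j0) = A). { unfold ps. simpl sumN. fold (ps b' j0). unfold term. rewrite Hb'. lra. }
      pose proof (pow3_pos N). assert (0 < / 3 ^ N) by (apply Rinv_0_lt_compat; auto). lra. }
  lra.
Qed.

Lemma enc_inj b b' : enc b = enc b' -> forall j, b j = b' j.
Proof.
  intros H j. destruct (Bool.bool_dec (b j) (b' j)) as [e|e]; auto. exfalso.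
  destruct (first_diff b b' j e) as [j0 [Hd Hpre]].
  destruct (b j0) eqn:E1; destruct (b' j0) eqn:E2; try congruence.
  - pose proof (enc_lt b b' j0 E1 E2 Hpre). lra.
  - assert (forall i, (i < j0)%nat -> b' i = b i) by (intros; symmetry; auto).
    pose proof (enc_lt b' b j0 E2 E1 H0). lra.
Qed.

Lemma part2 : exists g : (R -> pt) -> R,
     forall k1 k2, in_Pomega k1 -> in_Pomega k2 -> g k1 = g k2 -> homotopic k1 k2.
Proof.
  exists (fun k => enc (code k)). intros k1 k2 H1 H2 E.
  pose proof (in_Pomega_loop k1 H1) as L1. pose proof (in_Pomega_loop k2 H2) as L2.
  apply homotopic_eq; auto.
  apply agree_dense. apply L1. apply L2. apply code_inj. apply enc_inj. exact E.
Qed.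


Theorem lemma12p2 :
  (exists f : R -> (R -> pt),
     (forall r, in_Pomega (f r)) /\
     (forall r s, homotopic (f r) (f s) -> r = s)) /\
  (exists g : (R -> pt) -> R,
     forall k1 k2, in_Pomega k1 -> in_Pomega k2 ->
       g k1 = g k2 -> homotopic k1 k2).
Proof.
  split. exact part1. exact part2.
Qed.
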